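(* Let $f,g\in\mathcal{H}$ be strongly non-polynomial functions such that $f(t)\gg t^{\delta_1}$ and $g(t)\gg t^{\delta_2}$ for some $\delta_1,\delta_2>0$, and $g(t)\ll f(t)$. Then: (i) $S(f,k)=S(g,k)$ for some $k\in\mathbb{N}$ if and only if $f\sim g$; (ii) if $S(f,k)\cap S(g,\ell)\ne\emptyset$ then $k\ge\ell$; moreover, if the function $|f^{(k)}(t)|^{-1/k}$ belongs to $S(g,\ell)$ and $f\not\sim g$, then $k\ge\ell+1$; (iii) there exist infinitely many pairs of integers $(k,\ell)$ with $S(f,k)\cap S(g,\ell)\ne\emptyset$.
   Context: $\mathcal{H}$ is a fixed Hardy field (subfield of germs at $+\infty$ of real functions, closed under differentiation) containing the logarithmico-exponential functions, closed under composition and compositional inversion. $f$ is strongly non-polynomial if $t^d\prec f(t)\prec t^{d+1}$ for some integer $d\ge0$. $f\prec g$: $f/g\to0$; $f\ll g$: $|f|\le C|g|$ eventually; $f\sim g$: $f/g$ tends to a finite non-zero limit. For such $f$ and $k$ large enough that $f^{(k)}(t)\to0$, define $S(f,k)=\{g\in\mathcal{H}:\ |f^{(k)}(t)|^{-1/k}\preceq g(t)\prec|f^{(k+1)}(t)|^{-1/(k+1)}\}$, where $u\preceq v$ means that $\lim_{t\to\infty}|v(t)/u(t)|$ is non-zero (possibly infinite). *)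

(* Defs.v *)
From Stdlib Require Import Reals.
From Coquelicot Require Import Coquelicot.
Open Scope R_scope.

Definition ev (P : R -> Prop) : Prop := exists M : R, forall t, M < t -> P t.

(* Hardy's logarithmico-exponential functions (as functions R -> R, i.e.
   representatives of germs at +oo). *)
Inductive LE : (R -> R) -> Prop :=
| LE_id : LE (fun t => t)
| LE_const (c : R) : LE (fun _ => c)
| LE_plus (f g : R -> R) : LE f -> LE g -> LE (fun t => f t + g t)
| LE_mult (f g : R -> R) : LE f -> LE g -> LE (fun t => f t * g t)
| LE_inv (f : R -> R) : LE f -> ev (fun t => f t <> 0) -> LE (fun t => / f t)
| LE_exp (f : R -> R) : LE f -> LE (fun t => exp (f t))
| LE_ln (f : R -> R) : LE f -> ev (fun t => 0 < f t) -> LE (fun t => ln (f t)).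

(* A Hardy field: a set of germs at +oo (represented by functions, closed under
   eventual equality) forming a subfield of the ring of germs of continuous
   functions and closed under differentiation. *)
Record HardyField (H : (R -> R) -> Prop) : Prop := {
  hf_germ : forall f g, H f -> ev (fun t => f t = g t) -> H g;
  hf_const : forall c, H (fun _ => c);
  hf_plus : forall f g, H f -> H g -> H (fun t => f t + g t);
  hf_mult : forall f g, H f -> H g -> H (fun t => f t * g t);
  hf_inv : forall f, H f -> ~ ev (fun t => f t = 0) ->
             ev (fun t => f t <> 0) /\ H (fun t => / f t);
  hf_diff : forall f, H f -> ev (fun t => ex_derive f t) /\ H (Derive f)
}.

(* The fixed Hardy field of the paper: contains the LE functions and is closed
   under composition and compositional inversion. *)
Record GoodHardyField (H : (R -> R) -> Prop) : Prop := {
  ghf_hardy : HardyField H;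
  ghf_LE : forall f, LE f -> H f;
  ghf_comp : forall f g, H f -> H g -> is_lim g p_infty p_infty ->
               H (fun t => f (g t));
  ghf_inverse : forall f, H f -> is_lim f p_infty p_infty ->
      exists h, H h /\ is_lim h p_infty p_infty /\
                ev (fun t => f (h t) = t) /\ ev (fun t => h (f t) = t)
}.

Definition prec (f g : R -> R) : Prop :=
  is_lim (fun t => f t / g t) p_infty 0.
Definition ll (f g : R -> R) : Prop :=
  exists C : R, ev (fun t => Rabs (f t) <= C * Rabs (g t)).
Definition sim (f g : R -> R) : Prop :=
  exists l : R, l <> 0 /\ is_lim (fun t => f t / g t) p_infty l.
Definition preceq (u v : R -> R) : Prop :=
  exists l : Rbar, l <> Finite 0 /\ is_lim (fun t => Rabs (v t / u t)) p_infty l.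

Definition strongly_nonpoly (f : R -> R) : Prop :=
  exists d : nat, prec (fun t => t ^ d) f /\ prec f (fun t => t ^ (d + 1)).

(* k is admissible for f: f^(k)(t) -> 0, so that S(f,k) is defined *)
Definition admissible (f : R -> R) (k : nat) : Prop :=
  is_lim (Derive_n f k) p_infty 0.

Definition dscale (f : R -> R) (k : nat) : R -> R :=
  fun t => Rpower (Rabs (Derive_n f k t)) (- (1 / INR k)).

Definition Sset (H : (R -> R) -> Prop) (f : R -> R) (k : nat) (g : R -> R) : Prop :=
  H g /\ preceq (dscale f k) g /\ prec g (dscale f (S k)).

(* Main.v *)
Require Import Defs.
From Stdlib Require Import Reals Lra Lia Classical Factorial.
From Coquelicot Require Import Coquelicot.
Open Scope R_scope.

Lemma ev_and (P Q : R -> Prop) : ev P -> ev Q -> ev (fun t => P t /\ Q t).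
Proof.
  intros [M1 H1] [M2 H2]. exists (Rmax M1 M2). intros t Ht.
  split; [apply H1 | apply H2]; pose proof (Rmax_l M1 M2); pose proof (Rmax_r M1 M2); lra.
Qed.

Lemma ev_mono (P Q : R -> Prop) : ev P -> (forall t, P t -> Q t) -> ev Q.
Proof. intros [M HM] HPQ. exists M. intros t Ht. auto. Qed.

Lemma ev_gt (a : R) : ev (fun t => a < t).
Proof. exists a. auto. Qed.

Lemma ev_max (P : R -> Prop) (a : R) : ev P -> exists M, a <= M /\ forall t, M < t -> P t.
Proof. intros [M HM]. exists (Rmax a M). split. apply Rmax_l. intros t Ht. apply HM.
  pose proof (Rmax_r a M); lra. Qed.

Lemma lim_fin (u : R -> R) (l : R) :
  is_lim u p_infty l <-> forall eps, 0 < eps -> ev (fun t => Rabs (u t - l) < eps).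
Proof.
  rewrite <- is_lim_spec. split.
  - intros Hl eps He. exact (Hl (mkposreal eps He)).
  - intros Hl eps. exact (Hl eps (cond_pos eps)).
Qed.

Lemma lim_pinf (u : R -> R) :
  is_lim u p_infty p_infty <-> forall M, ev (fun t => M < u t).
Proof. rewrite <- is_lim_spec. tauto. Qed.

Lemma lim_minf (u : R -> R) :
  is_lim u p_infty m_infty <-> forall M, ev (fun t => u t < M).
Proof. rewrite <- is_lim_spec. tauto. Qed.

Lemma is_lim_ev_ext (u v : R -> R) (l : Rbar) :
  ev (fun t => u t = v t) -> is_lim u p_infty l -> is_lim v p_infty l.
Proof. intros He Hl. apply (is_lim_ext_loc u v); auto. Qed.

Lemma lim_uniq (u : R -> R) (l1 l2 : Rbar) :
  is_lim u p_infty l1 -> is_lim u p_infty l2 -> l1 = l2.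
Proof. intros H1 H2. rewrite <- (is_lim_unique _ _ _ H1). apply is_lim_unique; auto. Qed.

Definition lim01 (u : R -> R) : Prop :=
  is_lim u p_infty 0 \/ is_lim u p_infty p_infty \/ is_lim u p_infty m_infty.

Lemma lim_abs_inf (u : R -> R) :
  is_lim u p_infty p_infty \/ is_lim u p_infty m_infty ->
  is_lim (fun t => Rabs (u t)) p_infty p_infty.
Proof. intros [H|H]; apply is_lim_Rabs in H; exact H. Qed.

Lemma lim_abs0 (u : R -> R) :
  is_lim (fun t => Rabs (u t)) p_infty 0 <-> is_lim u p_infty 0.
Proof.
  rewrite !lim_fin. split; intros H eps He; destruct (H eps He) as [M HM]; exists M;
  intros t Ht; specialize (HM t Ht); rewrite Rminus_0_r in *; rewrite Rabs_Rabsolu in *; auto.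
Qed.

Lemma Rpower_ln (x y : R) : ln (Rpower x y) = y * ln x.
Proof. unfold Rpower. apply ln_exp. Qed.

Lemma nat_above (a : R) : exists n : nat, a < INR n.
Proof. destruct (INR_archimed 1 a) as [n Hn]; [lra|]. exists n. lra. Qed.

Lemma ln_lin_p (x : R -> R) (a b : R) : 0 < a ->
  ev (fun t => a * ln t + b <= x t) -> is_lim x p_infty p_infty.
Proof.
  intros Ha He. apply lim_pinf. intros M.
  assert (Hl : is_lim (fun t => a * ln t + b) p_infty p_infty).
  { eapply is_lim_plus. apply is_lim_scal_l. apply is_lim_ln_p. apply is_lim_const.
    simpl. unfold Rbar_mult, Rbar_mult'. destruct (Rle_dec 0 a); [|lra].
    destruct (Rle_lt_or_eq_dec 0 a r); [|lra]. constructor. }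
  apply lim_pinf with (M := M) in Hl.
  eapply ev_mono. apply (ev_and _ _ He Hl). intros t [H1 H2]. lra.
Qed.

Lemma ln_lin_m (x : R -> R) (a b : R) : a < 0 ->
  ev (fun t => x t <= a * ln t + b) -> is_lim x p_infty m_infty.
Proof.
  intros Ha He. apply lim_minf. intros M.
  assert (Hp : is_lim (fun t => - x t) p_infty p_infty).
  { apply (ln_lin_p _ (-a) (-b)); [lra|]. eapply ev_mono. apply He. intros t Ht. lra. }
  rewrite lim_pinf in Hp. eapply ev_mono. apply (Hp (-M)). intros t Ht. lra.
Qed.

Lemma nz_pos_prop (u : R -> R) (M : R) :
  (forall t, M < t -> u t <> 0 /\ continuity_pt u t) ->
  forall t0, M < t0 -> 0 < u t0 -> forall t, M < t -> 0 < u t.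
Proof.
  intros Hu t0 Ht0 Hp t Ht.
  destruct (Rlt_le_dec 0 (u t)) as [|Hn]; auto. exfalso.
  assert (Hn' : u t < 0) by (destruct (Hu t Ht); destruct Hn; [auto|congruence]).
  destruct (Rtotal_order t t0) as [Hlt|[Heq|Hgt]].
  - destruct (Ranalysis5.IVT_interv u t t0) as [z [Hz1 Hz2]]; auto.
    + intros a Ha. apply Hu. lra.
    + apply (Hu z); lra; auto.
  - subst; lra.
  - destruct (Ranalysis5.IVT_interv (fun x => - u x) t0 t) as [z [Hz1 Hz2]]; auto.
    + intros a Ha. apply continuity_pt_opp. apply Hu. lra.
    + lra.
    + lra.
    + apply (Hu z); [lra|]. lra.
Qed.

Lemma nz_sign (u : R -> R) (M : R) :
  (forall t, M < t -> u t <> 0 /\ continuity_pt u t) ->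
  (forall t, M < t -> 0 < u t) \/ (forall t, M < t -> u t < 0).
Proof.
  intros Hu. destruct (Rlt_le_dec 0 (u (M+1))) as [Hp|Hn].
  - left. apply (nz_pos_prop u M Hu (M+1)); auto. lra.
  - right. assert (Hn' : u (M+1) < 0).
    { destruct (Hu (M+1)) as [H1 _]; [lra|]. destruct Hn; auto. congruence. }
    intros t Ht.
    assert (0 < - u t); [|lra].
    apply (nz_pos_prop (fun x => - u x) M) with (t0 := M+1); auto; try lra.
    intros s Hs. destruct (Hu s Hs). split. intro; apply H; lra.
    apply continuity_pt_opp; auto.
Qed.

Lemma der_cont (u : R -> R) (t : R) : ex_derive u t -> continuity_pt u t.
Proof. intros Hd. apply continuity_pt_filterlim. apply (ex_derive_continuous u t Hd). Qed.

Section Hardy.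
Variable H : (R -> R) -> Prop.
Hypothesis HH : GoodHardyField H.

Lemma HF : HardyField H.
Proof. exact (ghf_hardy H HH). Qed.

Lemma H_germ (u v : R -> R) : H u -> ev (fun t => u t = v t) -> H v.
Proof. apply (hf_germ H HF). Qed.
Lemma H_const (c : R) : H (fun _ => c).
Proof. apply (hf_const H HF). Qed.
Lemma H_plus u v : H u -> H v -> H (fun t => u t + v t).
Proof. apply (hf_plus H HF). Qed.
Lemma H_mult u v : H u -> H v -> H (fun t => u t * v t).
Proof. apply (hf_mult H HF). Qed.
Lemma H_scal (c : R) u : H u -> H (fun t => c * u t).
Proof. intros; apply H_mult; auto; apply H_const. Qed.
Lemma H_inv u : H u -> ~ ev (fun t => u t = 0) -> H (fun t => / u t).
Proof. intros Hu Hn. apply (hf_inv H HF u Hu Hn). Qed.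
Lemma H_inv_ev u : H u -> ev (fun t => u t <> 0) -> H (fun t => / u t).
Proof. intros Hu [M HM]. apply H_inv; auto. intros [M' HM'].
  apply (HM (Rmax M M' + 1)). pose proof (Rmax_l M M'); lra.
  apply HM'. pose proof (Rmax_r M M'); lra. Qed.
Lemma H_div u v : H u -> H v -> ev (fun t => v t <> 0) -> H (fun t => u t / v t).
Proof. intros. apply H_mult; auto. apply H_inv_ev; auto. Qed.
Lemma H_id : H (fun t => t).
Proof. apply (ghf_LE H HH). constructor. Qed.
Lemma H_ln : H (fun t => ln t).
Proof. apply (ghf_LE H HH). apply LE_ln. constructor. exists 0. auto. Qed.
Lemma H_expf : H (fun t => exp t).
Proof. apply (ghf_LE H HH). apply LE_exp. constructor. Qed.
Lemma H_rpow (a : R) : H (fun t => Rpower t a).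
Proof. apply (ghf_LE H HH). unfold Rpower. apply LE_exp. apply LE_mult. constructor.
  apply LE_ln. constructor. exists 0. auto. Qed.

Lemma H_D u : H u -> H (Derive u).
Proof. intros Hu. apply (hf_diff H HF u Hu). Qed.
Lemma H_Dn u n : H u -> H (Derive_n u n).
Proof. intros Hu. induction n. simpl. exact Hu.
  apply (H_germ (Derive (Derive_n u n))). apply H_D; auto. exists 0. reflexivity. Qed.
Lemma H_isder u n : H u -> ev (fun t => is_derive (Derive_n u n) t (Derive_n u (S n) t)).
Proof. intros Hu. destruct (hf_diff H HF _ (H_Dn u n Hu)) as [He _].
  eapply ev_mono. apply He. intros t Ht. simpl. apply Derive_correct; auto. Qed.
Lemma H_exder u : H u -> ev (fun t => ex_derive u t).
Proof. intros Hu. apply (hf_diff H HF u Hu). Qed.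

Lemma H_sign u : H u ->
  ev (fun t => 0 < u t) \/ ev (fun t => u t < 0) \/ ev (fun t => u t = 0).
Proof.
  intros Hu. destruct (classic (ev (fun t => u t = 0))) as [Hz|Hz]; [auto|].
  destruct (hf_inv H HF u Hu Hz) as [Hnz _].
  destruct (ev_and _ _ Hnz (H_exder u Hu)) as [M HM].
  destruct (nz_sign u M) as [Hp|Hn].
  - intros t Ht. destruct (HM t Ht). split; auto. apply der_cont; auto.
  - left. exists M. auto.
  - right; left. exists M. auto.
Qed.

Lemma H_abs u : H u -> H (fun t => Rabs (u t)).
Proof.
  intros Hu. destruct (H_sign u Hu) as [Hp|[Hn|Hz]].
  - apply (H_germ u); auto. eapply ev_mono. apply Hp. intros t Ht. rewrite Rabs_pos_eq; lra.
  - apply (H_germ (fun t => (-1) * u t)). apply H_scal; auto.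
    eapply ev_mono. apply Hn. intros t Ht. rewrite Rabs_left; lra.
  - apply (H_germ u); auto. eapply ev_mono. apply Hz. intros t Ht. rewrite Ht, Rabs_R0; auto.
Qed.

End Hardy.

Lemma mvt (u du : R -> R) (M a b : R) :
  (forall t, M < t -> is_derive u t (du t)) -> M < a -> a <= b ->
  exists c, a <= c <= b /\ u b - u a = du c * (b - a).
Proof.
  intros Hd Ha Hab.
  destruct (MVT_gen u a b du) as [c [Hc1 Hc2]].
  - intros x Hx. apply Hd. rewrite Rmin_left in Hx; lra.
  - intros x Hx. rewrite Rmin_left, Rmax_right in Hx; try lra. apply der_cont.
    exists (du x). apply Hd. lra.
  - exists c. rewrite Rmin_left, Rmax_right in *; try lra. all: try tauto.
Qed.

Lemma mvt_incr (u du : R -> R) (M : R) :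
  (forall t, M < t -> is_derive u t (du t)) -> (forall t, M < t -> 0 <= du t) ->
  forall a b, M < a -> a <= b -> u a <= u b.
Proof.
  intros Hd Hp a b Ha Hab. destruct (mvt u du M a b Hd Ha Hab) as [c [Hc Hc2]].
  assert (0 <= du c * (b - a)). apply Rmult_le_pos. apply Hp; lra. lra. lra.
Qed.

Lemma mono_lim (u : R -> R) (M : R) :
  (forall a b, M < a -> a <= b -> u a <= u b) -> exists L, is_lim u p_infty L.
Proof.
  intros Hm.
  destruct (classic (exists B, forall t, M < t -> u t <= B)) as [[B HB]|HnB].
  - set (E := fun y => exists t, M < t /\ y = u t).
    destruct (completeness E) as [l [Hub Hlub]].
    + exists B. intros y [t [Ht ->]]. auto.
    + exists (u (M+1)). exists (M+1). split; auto; lra.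
    + exists (Finite l). apply lim_fin. intros eps He.
      destruct (classic (exists t, M < t /\ l - eps < u t)) as [[t0 [Ht0 Hl0]]|Hn].
      * exists t0. intros t Ht. assert (u t0 <= u t) by (apply Hm; lra).
        assert (u t <= l) by (apply Hub; exists t; split; auto; lra).
        rewrite Rabs_left1; lra.
      * exfalso. assert (l <= l - eps); [|lra]. apply Hlub. intros y [t [Ht ->]].
        destruct (Rle_dec (u t) (l - eps)); auto. exfalso; apply Hn. exists t. split; auto; lra.
  - exists p_infty. apply lim_pinf. intros B.
    destruct (classic (exists t, M < t /\ B < u t)) as [[t0 [Ht0 Hl0]]|Hn].
    + exists t0. intros t Ht. assert (u t0 <= u t) by (apply Hm; lra). lra.
    + exfalso. apply HnB. exists B. intros t Ht. destruct (Rle_dec (u t) B); auto.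
      exfalso; apply Hn; exists t; split; auto; lra.
Qed.

Section Hardy2.
Variable H : (R -> R) -> Prop.
Hypothesis HH : GoodHardyField H.

Lemma H_lim u : H u -> exists L, is_lim u p_infty L.
Proof.
  intros Hu. destruct (ev_and _ _ (H_isder H HH u 0 Hu) (ev_gt 0)) as [M0 HM0].
  assert (Hd : forall t, M0 < t -> is_derive u t (Derive u t)).
  { intros t Ht. apply (HM0 t Ht). }
  destruct (H_sign H HH (Derive u) (H_D H HH u Hu)) as [[M HM]|[[M HM]|[M HM]]].
  - apply (mono_lim u (Rmax M0 M)). apply (mvt_incr u (Derive u)).
    intros t Ht; apply Hd; pose proof (Rmax_l M0 M); lra.
    intros t Ht; left; apply HM; pose proof (Rmax_r M0 M); lra.
  - destruct (mono_lim (fun t => - u t) (Rmax M0 M)) as [L HL].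
    apply (mvt_incr _ (fun t => - Derive u t)).
    intros t Ht; apply (is_derive_opp u); apply Hd; pose proof (Rmax_l M0 M); lra.
    intros t Ht. assert (Derive u t < 0) by (apply HM; pose proof (Rmax_r M0 M); lra). lra.
    exists (Rbar_opp L). apply is_lim_opp in HL.
    eapply is_lim_ext. 2: apply HL. intros; simpl; ring.
  - apply (mono_lim u (Rmax M0 M)). apply (mvt_incr u (Derive u)).
    intros t Ht; apply Hd; pose proof (Rmax_l M0 M); lra.
    intros t Ht; right; symmetry; apply HM; pose proof (Rmax_r M0 M); lra.
Qed.

Lemma H_lim_abs u : H u -> exists L, is_lim (fun t => Rabs (u t)) p_infty L.
Proof. intros Hu. destruct (H_lim u Hu) as [L HL]. exists (Rbar_abs L). apply is_lim_Rabs; auto. Qed.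

End Hardy2.

Lemma cauchy_bound (u v du dv : R -> R) (M C : R) :
  (forall t, M < t -> is_derive u t (du t)) ->
  (forall t, M < t -> is_derive v t (dv t)) ->
  (forall t, M < t -> dv t <> 0) ->
  (forall t, M < t -> Rabs (du t) <= C * Rabs (dv t)) ->
  forall t s, M < t -> t <= s -> Rabs (u s - u t) <= C * Rabs (v s - v t).
Proof.
  intros Hu Hv Hnz Hb t s Ht Hts.
  set (h := fun x => (v s - v t) * u x - (u s - u t) * v x).
  set (dh := fun x => (v s - v t) * du x - (u s - u t) * dv x).
  assert (Hh : forall x, M < x -> is_derive h x (dh x)).
  { intros x Hx. unfold h, dh.
    apply (is_derive_minus (fun x => (v s - v t) * u x) (fun x => (u s - u t) * v x));
    apply is_derive_scal; auto. }
  destruct (mvt h dh M t s Hh Ht Hts) as [c [Hc Hc2]].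
  destruct (Req_dec s t) as [->|Hne].
  { rewrite !Rminus_eq_0, Rabs_R0. lra. }
  assert (Hdh : dh c = 0).
  { unfold h in Hc2. apply Rmult_eq_reg_r with (s - t); [|lra]. rewrite Rmult_0_l. rewrite <- Hc2. ring. }
  unfold dh in Hdh.
  assert (Hdc : 0 < Rabs (dv c)) by (apply Rabs_pos_lt; apply Hnz; lra).
  apply Rmult_le_reg_r with (Rabs (dv c)); auto.
  rewrite <- Rabs_mult.
  replace ((u s - u t) * dv c) with ((v s - v t) * du c) by lra.
  rewrite Rabs_mult.
  specialize (Hb c ltac:(lra)).
  assert (0 <= Rabs (v s - v t)) by apply Rabs_pos.
  nra.
Qed.

Lemma transfer1 (u v du dv : R -> R) (M C : R) :
  0 <= C ->
  (forall t, M < t -> is_derive u t (du t)) ->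
  (forall t, M < t -> is_derive v t (dv t)) ->
  (forall t, M < t -> dv t <> 0) ->
  (forall t, M < t -> Rabs (du t) <= C * Rabs (dv t)) ->
  lim01 u -> lim01 v ->
  forall eps, 0 < eps -> ev (fun t => Rabs (u t) <= (C + eps) * Rabs (v t)).
Proof.
  intros HC Hu Hv Hnz Hb Lu Lv eps He.
  pose proof (cauchy_bound u v du dv M C Hu Hv Hnz Hb) as Hcb.
  set (t0 := M + 1).
  destruct Lv as [Lv|Lv].
  -
    assert (Lu0 : is_lim u p_infty 0).
    { destruct Lu as [Lu|Lu]; auto. exfalso.
      assert (Hab : is_lim (fun t => Rabs (u t)) p_infty p_infty) by (apply lim_abs_inf; auto).
      rewrite lim_pinf in Hab.
      rewrite lim_fin in Lv. destruct (ev_and _ _ (Lv 1 ltac:(lra))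
        (Hab (Rabs (u t0) + C * (1 + Rabs (v t0))))) as [M1 HM1].
      set (s := Rmax M1 t0 + 1).
      destruct (HM1 s) as [H1 H2]. unfold s; pose proof (Rmax_l M1 t0); lra.
      specialize (Hcb t0 s ltac:(unfold t0; lra) ltac:(unfold s; pose proof (Rmax_r M1 t0); lra)).
      rewrite Rminus_0_r in H1.
      pose proof (Rabs_triang_inv (u s) (u t0)) as Ha. pose proof (Rabs_triang (v s) (- v t0)) as Hb2.
      rewrite Rabs_Ropp in Hb2. unfold Rminus in Hcb, Ha.
      assert (C * Rabs (v s + - v t0) <= C * (1 + Rabs (v t0))).
      { apply Rmult_le_compat_l; auto. lra. }
      lra. }
    exists M. intros t Ht.
    assert (Hle : Rabs (0 - u t) <= C * Rabs (0 - v t)).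
    { change (Rbar_le (Rabs (0 - u t)) (C * Rabs (0 - v t))). apply (is_lim_le_loc (fun s => Rabs (u s - u t)) (fun s => C * Rabs (v s - v t))
        p_infty (Rabs (0 - u t)) (C * Rabs (0 - v t))).
      - exists t. intros s Hs. apply Hcb; lra.
      - apply is_lim_Rabs with (l := Finite (0 - u t)). eapply is_lim_minus. apply Lu0. apply is_lim_const. reflexivity.
      - apply (is_lim_scal_l _ C p_infty (Finite (Rabs (0 - v t)))).
        apply is_lim_Rabs with (l := Finite (0 - v t)). eapply is_lim_minus. apply Lv. apply is_lim_const. reflexivity. }
    rewrite !Rminus_0_l, !Rabs_Ropp in Hle. 
    assert (0 <= eps * Rabs (v t)) by (apply Rmult_le_pos; [lra|apply Rabs_pos]). lra.
  -
    apply lim_abs_inf in Lv. rewrite lim_pinf in Lv.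
    destruct (ev_and _ _ (Lv ((Rabs (u t0) + C * Rabs (v t0)) / eps)) (ev_gt t0)) as [M1 HM1].
    exists M1. intros s Hs. destruct (HM1 s Hs) as [H1 H2].
    specialize (Hcb t0 s ltac:(unfold t0; lra) ltac:(lra)).
    pose proof (Rabs_triang_inv (u s) (u t0)) as Ha. pose proof (Rabs_triang (v s) (- v t0)) as Hb2.
    rewrite Rabs_Ropp in Hb2. unfold Rminus in Hcb, Ha.
    assert (C * Rabs (v s + - v t0) <= C * (Rabs (v s) + Rabs (v t0))).
    { apply Rmult_le_compat_l; auto. }
    assert (Rabs (u t0) + C * Rabs (v t0) < eps * Rabs (v s)).
    { apply Rmult_lt_reg_r with (/ eps). apply Rinv_0_lt_compat; auto.
      replace (eps * Rabs (v s) * / eps) with (Rabs (v s)) by (field; lra). exact H1. }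
    lra.
Qed.

Lemma bound_step (u v du dv : R -> R) :
  ev (fun t => is_derive u t (du t)) -> ev (fun t => is_derive v t (dv t)) ->
  ev (fun t => dv t <> 0) -> lim01 u -> lim01 v ->
  (exists C, ev (fun t => Rabs (du t) <= C * Rabs (dv t))) ->
  exists C, ev (fun t => Rabs (u t) <= C * Rabs (v t)).
Proof.
  intros H1 H2 H3 L1 L2 [C HC].
  destruct (ev_and _ _ (ev_and _ _ H1 H2) (ev_and _ _ H3 HC)) as [M HM].
  exists (Rmax C 0 + 1).
  apply (transfer1 u v du dv M (Rmax C 0)).
  - apply Rmax_r.
  - intros t Ht; apply HM; auto.
  - intros t Ht; apply HM; auto.
  - intros t Ht; apply HM; auto.
  - intros t Ht. destruct (HM t Ht) as [_ [_ Hb]].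
    eapply Rle_trans. apply Hb. apply Rmult_le_compat_r. apply Rabs_pos. apply Rmax_l.
  - auto.
  - auto.
  - lra.
Qed.

Lemma down_transfer (U V : nat -> R -> R) (j : nat) :
  (forall i, (i < j)%nat -> ev (fun t => is_derive (U i) t (U (S i) t))) ->
  (forall i, (i < j)%nat -> ev (fun t => is_derive (V i) t (V (S i) t))) ->
  (forall i, (i < j)%nat -> ev (fun t => V (S i) t <> 0)) ->
  (forall i, (i < j)%nat -> lim01 (U i)) ->
  (forall i, (i < j)%nat -> lim01 (V i)) ->
  (exists C, ev (fun t => Rabs (U j t) <= C * Rabs (V j t))) ->
  exists C, ev (fun t => Rabs (U 0%nat t) <= C * Rabs (V 0%nat t)).
Proof.
  intros H1 H2 H3 L1 L2 Hj.
  assert (Hc : forall n, (n <= j)%nat -> exists C, ev (fun t => Rabs (U (j - n)%nat t) <= C * Rabs (V (j - n)%nat t))).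
  { induction n; intros Hn.
    - rewrite Nat.sub_0_r. auto.
    - assert (Hm : (S (j - S n) = j - n)%nat) by lia.
      apply (bound_step _ _ (U (S (j - S n))) (V (S (j - S n)))).
      apply H1; lia. apply H2; lia. apply H3; lia. apply L1; lia. apply L2; lia.
      rewrite Hm. apply IHn. lia. }
  destruct (Hc j (le_n j)) as [C HC]. rewrite Nat.sub_diag in HC. eauto.
Qed.

Definition good (u : R -> R) (i : nat) : Prop :=
  ev (fun t => Derive_n u i t <> 0) /\ lim01 (Derive_n u i).

Lemma abs_lim_cases (w : R -> R) (L : Rbar) :
  is_lim (fun t => Rabs (w t)) p_infty L ->
  (exists l, ev (fun t => Rabs (w t) <= l)) \/ is_lim (fun t => Rabs (w t)) p_infty p_infty.
Proof.
  intros HL. destruct L as [l| |].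
  - left. exists (l + 1). rewrite lim_fin in HL. eapply ev_mono. apply (HL 1 ltac:(lra)).
    intros t Ht. apply Rabs_def2 in Ht. lra.
  - right; auto.
  - exfalso. assert (Hle : Rbar_le 0 m_infty).
    { apply (is_lim_le_loc (fun _ => 0) (fun t => Rabs (w t)) p_infty); auto.
      exists 0. intros; apply Rabs_pos. apply is_lim_const. }
    simpl in Hle. auto.
Qed.

Section Hardy3.
Variable H : (R -> R) -> Prop.
Hypothesis HH : GoodHardyField H.

Lemma up_transfer (u v : R -> R) : H u -> H v -> (forall i, good u i) -> (forall i, good v i) ->
  (exists C, ev (fun t => Rabs (v t) <= C * Rabs (u t))) ->
  forall i, exists C, ev (fun t => Rabs (Derive_n v i t) <= C * Rabs (Derive_n u i t)).
Proof.
  intros Hu Hv Gu Gv H0 i. induction i as [|i IH]. { simpl. exact H0. }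
  destruct IH as [C HC].
  destruct (Gu (S i)) as [Nu1 _]. destruct (Gv (S i)) as [Nv1 _].
  destruct (Gu i) as [Nu0 Lu0]. destruct (Gv i) as [Nv0 Lv0].
  set (w := fun t => Derive_n v (S i) t / Derive_n u (S i) t).
  assert (Hw : H w) by (apply H_div; auto; apply H_Dn; auto).
  destruct (H_lim_abs H HH w Hw) as [L HL].
  destruct (abs_lim_cases w L HL) as [[l Hl]|Hinf].
  - exists l. eapply ev_mono. apply (ev_and _ _ Hl Nu1). intros t [H1 H2].
    unfold w in H1. rewrite Rabs_div in H1; auto.
    assert (0 < Rabs (Derive_n u (S i) t)) by (apply Rabs_pos_lt; auto).
    apply Rmult_le_compat_r with (r := Rabs (Derive_n u (S i) t)) in H1; [|lra].
    replace (Rabs (Derive_n v (S i) t) / Rabs (Derive_n u (S i) t) * Rabs (Derive_n u (S i) t))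
      with (Rabs (Derive_n v (S i) t)) in H1 by (field; lra). exact H1.
  - exfalso.
    set (eps := / (4 * (Rabs C + 1))).
    assert (Heps : 0 < eps) by (unfold eps; apply Rinv_0_lt_compat; pose proof (Rabs_pos C); lra).
    rewrite lim_pinf in Hinf.
    destruct (ev_and _ _ (ev_and _ _ (H_isder H HH u i Hu) (H_isder H HH v i Hv))
               (ev_and _ _ (Hinf (/ eps)) Nv1)) as [M HM].
    assert (Ht1 := transfer1 (Derive_n u i) (Derive_n v i) (Derive_n u (S i)) (Derive_n v (S i)) M eps
      ltac:(lra) ltac:(intros t Ht; apply HM; auto) ltac:(intros t Ht; apply HM; auto)
      ltac:(intros t Ht; apply HM; auto)).
    assert (Hb : forall t, M < t -> Rabs (Derive_n u (S i) t) <= eps * Rabs (Derive_n v (S i) t)).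
    { intros t Ht. destruct (HM t Ht) as [_ [H1 H2]]. unfold w in H1.
      destruct (Req_dec (Derive_n u (S i) t) 0) as [Hz|Hz].
      { rewrite Hz, Rabs_R0. apply Rmult_le_pos; [lra|apply Rabs_pos]. }
      rewrite Rabs_div in H1; auto.
      assert (0 < Rabs (Derive_n u (S i) t)) by (apply Rabs_pos_lt; auto).
      assert (Hx : / eps * Rabs (Derive_n u (S i) t) < Rabs (Derive_n v (S i) t)).
      { apply Rmult_lt_compat_r with (r := Rabs (Derive_n u (S i) t)) in H1; auto.
        replace (Rabs (Derive_n v (S i) t) / Rabs (Derive_n u (S i) t) * Rabs (Derive_n u (S i) t))
          with (Rabs (Derive_n v (S i) t)) in H1 by (field; lra). exact H1. }
      apply Rmult_lt_compat_l with (r := eps) in Hx; auto.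
      rewrite <- Rmult_assoc, Rinv_r, Rmult_1_l in Hx; lra. }
    specialize (Ht1 Hb Lu0 Lv0 eps Heps).
    destruct (ev_and _ _ (ev_and _ _ Ht1 HC) Nu0) as [M2 HM2].
    destruct (HM2 (M2 + 1) ltac:(lra)) as [[H1 H2] H3].
    set (a := Rabs (Derive_n u i (M2 + 1))) in *. set (b := Rabs (Derive_n v i (M2 + 1))) in *.
    assert (0 < a) by (apply Rabs_pos_lt; auto).
    assert (b <= (Rabs C + 1) * a).
    { eapply Rle_trans. apply H2. apply Rmult_le_compat_r; [lra|]. pose proof (Rle_abs C); lra. }
    assert (a <= (eps + eps) * ((Rabs C + 1) * a)).
    { eapply Rle_trans. apply H1. apply Rmult_le_compat_l; lra. }
    assert ((eps + eps) * ((Rabs C + 1) * a) = a / 2).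
    { unfold eps. field. pose proof (Rabs_pos C); lra. }
    lra.
Qed.
End Hardy3.

Definition W (n : nat) (t : R) : R := / INR (fact n) * t ^ n.

Lemma fact_pos n : 0 < INR (fact n).
Proof. apply lt_0_INR. apply lt_O_fact. Qed.

Lemma W_der n t : is_derive (W (S n)) t (W n t).
Proof.
  unfold W.
  replace (/ INR (fact n) * t ^ n) with (/ INR (fact (S n)) * (INR (S n) * 1 * t ^ Nat.pred (S n))).
  - apply is_derive_scal. apply is_derive_pow. apply (is_derive_id (K := R_AbsRing)).
  - simpl Nat.pred. rewrite fact_simpl, mult_INR. field.
    split. pose proof (fact_pos n); lra. rewrite S_INR. pose proof (pos_INR n); lra.
Qed.

Lemma W_pos n t : 0 < t -> 0 < W n t.
Proof. intros Ht. unfold W. apply Rmult_lt_0_compat. apply Rinv_0_lt_compat, fact_pos. apply pow_lt; auto. Qed.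

Lemma W0 t : W 0 t = 1.
Proof. unfold W. simpl. field. Qed.

Lemma W_lim n : is_lim (W (S n)) p_infty p_infty.
Proof.
  apply lim_pinf. intros M. exists (Rmax 1 (M * INR (fact (S n)))). intros t Ht.
  pose proof (Rmax_l 1 (M * INR (fact (S n)))). pose proof (Rmax_r 1 (M * INR (fact (S n)))).
  pose proof (fact_pos (S n)).
  assert (t <= t ^ S n). { simpl. assert (1 <= t ^ n) by (apply pow_R1_Rle; lra). nra. }
  unfold W. apply Rmult_lt_reg_l with (INR (fact (S n))); auto.
  rewrite <- Rmult_assoc, Rinv_r, Rmult_1_l; lra.
Qed.

Lemma lim01_W n : lim01 (W (S n)).
Proof. right; left. apply W_lim. Qed.

Section Hardy4.
Variable H : (R -> R) -> Prop.
Hypothesis HH : GoodHardyField H.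

Lemma nonpoly_const (u : R -> R) (j : nat) (c : R) : H u -> strongly_nonpoly u ->
  ev (fun t => u t <> 0) ->
  (forall i, (i < j)%nat -> good u i) -> ev (fun t => Derive_n u j t <> 0) ->
  c <> 0 -> is_lim (Derive_n u j) p_infty c -> False.
Proof.
  intros Hu Snp Nz0 IH Nz Hc Hl.
  assert (Hwd : forall i, (i < j)%nat -> ev (fun t => is_derive (W (j - i)) t (W (j - S i) t))).
  { intros i Hi. exists 0. intros t _. replace (j - i)%nat with (S (j - S i)) by lia. apply W_der. }
  assert (Hwnz : forall i, ev (fun t => W i t <> 0)).
  { intros i. exists 0. intros t Ht. pose proof (W_pos i t Ht). lra. }
  assert (Hwl : forall i, (i < j)%nat -> lim01 (W (j - i))).
  { intros i Hi. replace (j - i)%nat with (S (j - S i)) by lia. apply lim01_W. }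
  rewrite lim_fin in Hl.
  destruct (down_transfer (Derive_n u) (fun i => W (j - i)%nat) j) as [C1 HC1].
  - intros i Hi. apply (H_isder H HH); auto.
  - apply Hwd.
  - intros i Hi. apply Hwnz.
  - intros i Hi. apply IH; auto.
  - apply Hwl.
  - exists (Rabs c + 1). eapply ev_mono. apply (Hl 1 ltac:(lra)). intros t Ht.
    rewrite Nat.sub_diag, W0, Rabs_R1, Rmult_1_r. pose proof (Rabs_triang_inv (Derive_n u j t) c). lra.
  - destruct (down_transfer (fun i => W (j - i)%nat) (Derive_n u) j) as [C2 HC2].
    + apply Hwd.
    + intros i Hi. apply (H_isder H HH); auto.
    + intros i Hi. destruct (Nat.eq_dec (S i) j) as [->|Hne]; auto. apply IH. lia.
    + apply Hwl.
    + intros i Hi. apply IH; auto.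
    + exists (2 / Rabs c). pose proof (Rabs_pos_lt c Hc).
      eapply ev_mono. apply (Hl (Rabs c / 2) ltac:(lra)). intros t Ht.
      rewrite Nat.sub_diag, W0, Rabs_R1. pose proof (Rabs_triang_inv c (Derive_n u j t)).
      cbv beta in Ht. rewrite Rabs_minus_sym in Ht.
      apply Rmult_le_reg_l with (Rabs c / 2). lra.
      replace (Rabs c / 2 * (2 / Rabs c * Rabs (Derive_n u j t))) with (Rabs (Derive_n u j t)) by (field; lra).
      lra.
    + simpl in HC1, HC2. rewrite Nat.sub_0_r in HC1, HC2.
      destruct Snp as [d [Hp1 Hp2]].
      pose proof (fact_pos j) as Hfj.
      destruct (Compare_dec.le_lt_dec j d) as [Hjd|Hjd].
      * set (eps := / (Rabs C1 + 1)).
        assert (He : 0 < eps) by (unfold eps; apply Rinv_0_lt_compat; pose proof (Rabs_pos C1); lra).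
        unfold prec in Hp1. rewrite lim_fin in Hp1.
        destruct (ev_and _ _ (ev_and _ _ (Hp1 eps He) HC1) (ev_and _ _ (ev_gt 1) Nz0)) as [M HM].
        set (t := Rmax M 1 + 1).
        destruct (HM t) as [[H1 H2] [H3 Hz]]. unfold t; pose proof (Rmax_l M 1); lra.
        assert (Ht1 : 1 <= t) by (unfold t; pose proof (Rmax_r M 1); lra).
        assert (Htd : 0 < t ^ d) by (apply pow_lt; lra).
        assert (Hwj : W j t <= t ^ d).
        { unfold W. assert (t ^ j <= t ^ d) by (apply Rle_pow; auto).
          assert (/ INR (fact j) <= 1).
          { rewrite <- Rinv_1. apply Rinv_le_contravar. lra. apply (le_INR 1). apply lt_O_fact. }
          assert (0 <= t ^ j) by (apply pow_le; lra). nra. }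
        rewrite Rminus_0_r in H1.
        rewrite Rabs_div in H1 by auto. rewrite (Rabs_pos_eq (t ^ d)) in H1 by lra.
        assert (Hu0 : 0 < Rabs (u t)) by (apply Rabs_pos_lt; auto).
        assert (t ^ d < eps * Rabs (u t)).
        { apply Rmult_lt_compat_r with (r := Rabs (u t)) in H1; auto.
          unfold Rdiv in H1. rewrite Rmult_assoc, Rinv_l, Rmult_1_r in H1; lra. }
        rewrite (Rabs_pos_eq (W j t)) in H2 by (apply Rlt_le, W_pos; lra).
        assert (Rabs (u t) <= (Rabs C1 + 1) * t ^ d).
        { eapply Rle_trans. apply H2. pose proof (Rle_abs C1). pose proof (W_pos j t ltac:(lra)).
          pose proof (Rabs_pos C1).
          assert (C1 * W j t <= Rabs C1 * W j t) by (apply Rmult_le_compat_r; lra).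
          assert (Rabs C1 * W j t <= Rabs C1 * t ^ d) by (apply Rmult_le_compat_l; lra).
          lra. }
        assert (eps * Rabs (u t) <= t ^ d).
        { apply Rmult_le_compat_l with (r := eps) in H4; [|lra].
          unfold eps in H4 at 2. rewrite <- Rmult_assoc, Rinv_l, Rmult_1_l in H4; auto.
          pose proof (Rabs_pos C1); lra. }
        lra.
      * set (eps := / (INR (fact j) * (Rabs C2 + 1))).
        assert (He : 0 < eps).
        { unfold eps; apply Rinv_0_lt_compat. apply Rmult_lt_0_compat; auto. pose proof (Rabs_pos C2); lra. }
        unfold prec in Hp2. rewrite lim_fin in Hp2.
        destruct (ev_and _ _ (ev_and _ _ (Hp2 eps He) HC2) (ev_and _ _ (ev_gt 1) Nz0)) as [M HM].
        set (t := Rmax M 1 + 1).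
        destruct (HM t) as [[H1 H2] [H3 Hz]]. unfold t; pose proof (Rmax_l M 1); lra.
        assert (Ht1 : 1 <= t) by (unfold t; pose proof (Rmax_r M 1); lra).
        assert (Htd : 0 < t ^ (d + 1)) by (apply pow_lt; lra).
        assert (Htj : t ^ (d + 1) <= t ^ j) by (apply Rle_pow; auto; lia).
        rewrite Rminus_0_r, Rabs_div in H1 by lra. rewrite (Rabs_pos_eq (t ^ (d+1))) in H1 by lra.
        assert (Rabs (u t) < eps * t ^ (d + 1)).
        { apply Rmult_lt_compat_r with (r := t ^ (d+1)) in H1; auto.
          unfold Rdiv in H1. rewrite Rmult_assoc, Rinv_l, Rmult_1_r in H1; lra. }
        rewrite (Rabs_pos_eq (W j t)) in H2 by (apply Rlt_le, W_pos; lra).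
        unfold W in H2.
        assert (Htj0 : 0 < t ^ j) by (apply pow_lt; lra).
        assert (t ^ j <= INR (fact j) * (Rabs C2 + 1) * Rabs (u t)).
        { apply Rmult_le_compat_l with (r := INR (fact j)) in H2; [|lra].
          rewrite <- Rmult_assoc, Rinv_r, Rmult_1_l in H2 by lra.
          pose proof (Rle_abs C2). pose proof (Rabs_pos (u t)).
          assert (C2 * Rabs (u t) <= (Rabs C2 + 1) * Rabs (u t)) by (apply Rmult_le_compat_r; lra).
          assert (INR (fact j) * (C2 * Rabs (u t)) <= INR (fact j) * ((Rabs C2 + 1) * Rabs (u t))) by (apply Rmult_le_compat_l; lra).
          lra. }
        assert (INR (fact j) * (Rabs C2 + 1) * eps = 1).
        { unfold eps. field. split. pose proof (Rabs_pos C2); lra. lra. }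
        assert (0 < INR (fact j) * (Rabs C2 + 1)) by (pose proof (Rabs_pos C2); nra).
        nra.
Qed.

Lemma all_good (u : R -> R) : H u -> strongly_nonpoly u -> ev (fun t => u t <> 0) ->
  forall j, good u j.
Proof.
  intros Hu Snp Nz0 j. induction j as [j IH] using (well_founded_induction Wf_nat.lt_wf).
  assert (HUj : H (Derive_n u j)) by (apply (H_Dn H HH); auto).
  destruct (H_lim H HH _ HUj) as [L HL].
  destruct (H_sign H HH _ HUj) as [Hs|[Hs|Hs]].
  3: { exfalso. destruct j as [|m].
       - simpl in Hs. destruct (ev_and _ _ Hs Nz0) as [M HM]. destruct (HM (M+1)) as [Ha Hb]; [lra|]. auto.
       - destruct (IH m ltac:(lia)) as [Nm Lm].
         destruct (ev_and _ _ (ev_and _ _ Hs (H_isder H HH u m Hu)) Nm) as [M HM].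
         assert (Hcst : forall t, M < t -> Derive_n u m t = Derive_n u m (M + 1)).
         { intros t Ht. destruct (Rle_lt_dec (M+1) t) as [Hle|Hlt].
           - destruct (mvt (Derive_n u m) (Derive_n u (S m)) M (M+1) t) as [c [Hc1 Hc2]]; auto.
             intros s Hs'; apply HM; auto. lra.
             rewrite (proj1 (proj1 (HM c ltac:(lra)))) in Hc2. lra.
           - destruct (mvt (Derive_n u m) (Derive_n u (S m)) M t (M+1)) as [c [Hc1 Hc2]]; auto.
             intros s Hs'; apply HM; auto. lra.
             rewrite (proj1 (proj1 (HM c ltac:(lra)))) in Hc2. lra. }
         assert (Hk : is_lim (Derive_n u m) p_infty (Derive_n u m (M+1))).
         { apply (is_lim_ev_ext (fun _ => Derive_n u m (M+1))). exists M. intros t Ht. symmetry; auto.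
           apply is_lim_const. }
         assert (Hk0 : Derive_n u m (M + 1) <> 0) by (apply HM; lra).
         destruct Lm as [Lm|[Lm|Lm]]; pose proof (lim_uniq _ _ _ Hk Lm) as Heq; try discriminate.
         injection Heq. auto. }
  all: assert (Nz : ev (fun t => Derive_n u j t <> 0)) by (eapply ev_mono; [apply Hs|]; intros t Ht; lra).
  all: split; auto.
  all: destruct L as [c| |]; [|right; left; auto|right; right; auto].
  all: destruct (Req_dec c 0) as [->|Hc]; [left; auto|].
  all: exfalso; apply (nonpoly_const u j c); auto.
Qed.
End Hardy4.

Fixpoint ff (a : R) (i : nat) : R :=
  match i with O => 1 | S i => ff a i * (a - INR i) end.

Lemma Dn_rpow a i t : 0 < t ->
  Derive_n (fun t => Rpower t a) i t = ff a i * Rpower t (a - INR i).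
Proof.
  revert t. induction i as [|i IH]; intros t Ht.
  - simpl. rewrite Rminus_0_r. ring.
  - simpl Derive_n.
    rewrite (Derive_ext_loc _ (fun s => ff a i * Rpower s (a - INR i))).
    + apply is_derive_unique.
      replace (ff a (S i) * Rpower t (a - INR (S i))) with (ff a i * ((a - INR i) * Rpower t (a - INR i - 1))).
      * apply is_derive_scal. apply is_derive_Reals. apply derivable_pt_lim_power; auto.
      * simpl ff. replace (a - INR i - 1) with (a - INR (S i)) by (rewrite S_INR; ring). ring.
    + exists (mkposreal (t/2) ltac:(lra)). intros y Hy. apply IH.
      assert (Hy' : Rabs (y - t) < t / 2) by apply Hy. apply Rabs_def2 in Hy'. lra.
Qed.

Lemma ff_nz a i : (forall n : nat, a <> INR n) -> ff a i <> 0.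
Proof.
  intros Ha. induction i; simpl. lra. apply Rmult_integral_contrapositive. split; auto.
  specialize (Ha i). lra.
Qed.

Lemma Rpower_pos t b : 0 < Rpower t b.
Proof. unfold Rpower. apply exp_pos. Qed.

Lemma lim_rpow_p b : 0 < b -> is_lim (fun t => Rpower t b) p_infty p_infty.
Proof.
  intros Hb. apply (ln_lin_p _ b 1); auto. exists 0. intros t Ht. unfold Rpower.
  pose proof (exp_ineq1_le (b * ln t)). lra.
Qed.

Lemma lim_rpow_m b : b < 0 -> is_lim (fun t => Rpower t b) p_infty 0.
Proof.
  intros Hb. unfold Rpower. apply (is_lim_comp exp (fun t => b * ln t) p_infty 0 m_infty).
  apply is_lim_exp_m. apply (ln_lin_m _ b 0); auto. exists 0. intros; lra.
  exists 0. intros; discriminate.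
Qed.

Lemma lim01_scal (c : R) (w : R -> R) : c <> 0 -> lim01 w -> lim01 (fun t => c * w t).
Proof.
  intros Hc [Hw|[Hw|Hw]].
  - left. rewrite lim_fin in *. intros eps He.
    pose proof (Rabs_pos_lt c Hc).
    eapply ev_mono. apply (Hw (eps / Rabs c)). apply Rdiv_lt_0_compat; auto.
    intros t Ht. cbv beta in *. rewrite Rminus_0_r in *. rewrite Rabs_mult.
    apply Rmult_lt_compat_l with (r := Rabs c) in Ht; auto.
    replace (Rabs c * (eps / Rabs c)) with eps in Ht by (field; lra). lra.
  - right. rewrite lim_pinf in Hw. destruct (Rlt_le_dec 0 c) as [Hp|Hn].
    + left. rewrite lim_pinf. intros M. eapply ev_mono. apply (Hw (M / c)). intros t Ht. cbv beta in *.
      apply Rmult_lt_compat_l with (r := c) in Ht; auto.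
      replace (c * (M / c)) with M in Ht by (field; lra). lra.
    + right. rewrite lim_minf. intros M. eapply ev_mono. apply (Hw (M / c)). intros t Ht. cbv beta in *.
      assert (c < 0) by lra.
      apply Rmult_lt_gt_compat_neg_l with (r := c) in Ht; auto.
      replace (c * (M / c)) with M in Ht by (field; lra). lra.
  - right. rewrite lim_minf in Hw. destruct (Rlt_le_dec 0 c) as [Hp|Hn].
    + right. rewrite lim_minf. intros M. eapply ev_mono. apply (Hw (M / c)). intros t Ht. cbv beta in *.
      apply Rmult_lt_compat_l with (r := c) in Ht; auto.
      replace (c * (M / c)) with M in Ht by (field; lra). lra.
    + left. rewrite lim_pinf. intros M. eapply ev_mono. apply (Hw (M / c)). intros t Ht. cbv beta in *.
      assert (c < 0) by lra.
      apply Rmult_lt_gt_compat_neg_l with (r := c) in Ht; auto.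
      replace (c * (M / c)) with M in Ht by (field; lra). lra.
Qed.

Lemma good_rpow a : (forall n : nat, a <> INR n) -> forall i, good (fun t => Rpower t a) i.
Proof.
  intros Ha i. assert (He : ev (fun t => Derive_n (fun t => Rpower t a) i t = ff a i * Rpower t (a - INR i))).
  { exists 0. intros t Ht. apply Dn_rpow; auto. }
  split.
  - eapply ev_mono. apply He. intros t Ht. rewrite Ht. apply Rmult_integral_contrapositive.
    split. apply ff_nz; auto. pose proof (Rpower_pos t (a - INR i)); lra.
  - assert (Hl : lim01 (fun t => ff a i * Rpower t (a - INR i))).
    { apply lim01_scal. apply ff_nz; auto.
      destruct (Rtotal_order (a - INR i) 0) as [Hn|[Hz|Hp]].
      - left. apply lim_rpow_m; auto.
      - exfalso. apply (Ha i). lra.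
      - right; left. apply lim_rpow_p; auto. }
    assert (He' : ev (fun t => ff a i * Rpower t (a - INR i) = Derive_n (fun t => Rpower t a) i t)).
    { eapply ev_mono. apply He. intros; auto. }
    destruct Hl as [Hl|[Hl|Hl]]; [left|right;left|right;right]; exact (is_lim_ev_ext _ _ _ He' Hl).
Qed.

Definition lf (f : R -> R) (i : nat) (t : R) : R := ln (Rabs (Derive_n f i t)).

Section Hardy5.
Variable H : (R -> R) -> Prop.
Hypothesis HH : GoodHardyField H.

Lemma profile (f : R -> R) (d1 : R) : H f -> strongly_nonpoly f -> 0 < d1 ->
  ll (fun t => Rpower t d1) f ->
  exists δ A, 0 < δ /\ δ < A /\ (forall i, good f i) /\
   (forall i, exists K, ev (fun t => (δ - INR i) * ln t - K <= lf f i t /\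
                                      lf f i t <= (A - INR i) * ln t + K)).
Proof.
  intros Hf Snp Hd1 [C0 HC0].
  assert (Nz : ev (fun t => f t <> 0)).
  { eapply ev_mono. apply HC0. intros t Ht Hz. cbv beta in Ht. rewrite Hz, Rabs_R0, Rmult_0_r in Ht.
    pose proof (Rpower_pos t d1). rewrite Rabs_pos_eq in Ht; lra. }
  pose proof (all_good H HH f Hf Snp Nz) as G.
  destruct Snp as [d [_ Hp2]].
  set (A := INR d + 3/2). set (δ := Rmin d1 (1/2) / 2).
  assert (Hδ : 0 < δ) by (unfold δ; apply Rmin_case; lra).
  assert (Hδ1 : δ <= d1) by (unfold δ; pose proof (Rmin_l d1 (1/2)); lra).
  assert (Hδ2 : δ < 1) by (unfold δ; pose proof (Rmin_r d1 (1/2)); lra).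
  assert (HA : 3/2 <= A) by (unfold A; pose proof (pos_INR d); lra).
  assert (NA : forall n : nat, A <> INR n).
  { intros n Hn. unfold A in Hn.
    assert (INR (2 * d + 3) = INR (2 * n)).
    { rewrite plus_INR, !mult_INR. simpl. lra. }
    apply INR_eq in H0. lia. }
  assert (Nδ : forall n : nat, δ <> INR n).
  { intros n Hn. destruct n. simpl in Hn; lra. rewrite S_INR in Hn. pose proof (pos_INR n). lra. }
  assert (Up : forall i, exists C, ev (fun t => Rabs (Derive_n f i t) <= C * Rabs (Derive_n (fun t => Rpower t A) i t))).
  { apply (up_transfer H HH); auto. apply H_rpow; auto. apply good_rpow; auto.
    exists 1. unfold prec in Hp2. rewrite lim_fin in Hp2.
    destruct (ev_and _ _ (Hp2 1 ltac:(lra)) (ev_gt 1)) as [M HM]. exists M. intros t Ht.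
    destruct (HM t Ht) as [H1 H2]. rewrite Rminus_0_r in H1.
    assert (Htp : 0 < t ^ (d + 1)) by (apply pow_lt; lra).
    rewrite Rabs_div in H1 by lra. rewrite (Rabs_pos_eq (t ^ (d+1))) in H1 by lra.
    assert (Rabs (f t) < t ^ (d + 1)).
    { apply Rmult_lt_compat_r with (r := t ^ (d+1)) in H1; auto.
      unfold Rdiv in H1. rewrite Rmult_assoc, Rinv_l, Rmult_1_r in H1; lra. }
    rewrite <- Rpower_pow in H0 by lra.
    assert (Rpower t (INR (d + 1)) <= Rpower t A).
    { apply Rle_Rpower. lra. rewrite plus_INR. unfold A. simpl. lra. }
    simpl Derive_n. rewrite (Rabs_pos_eq (Rpower t A)) by (apply Rlt_le, Rpower_pos). lra. }
  assert (Lo : forall i, exists C, ev (fun t => Rabs (Derive_n (fun t => Rpower t δ) i t) <= C * Rabs (Derive_n f i t))).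
  { apply (up_transfer H HH); auto. apply H_rpow; auto. apply good_rpow; auto.
    exists C0. eapply ev_mono. apply (ev_and _ _ HC0 (ev_gt 1)). intros t [H1 H2].
    simpl Derive_n. eapply Rle_trans; [|apply H1]. rewrite !(Rabs_pos_eq (Rpower _ _)) by (apply Rlt_le, Rpower_pos).
    apply Rle_Rpower; lra. }
  exists δ, A. split; auto. split; [lra|]. split; auto.
  intros i. destruct (Up i) as [C1 HC1]. destruct (Lo i) as [C2 HC2]. destruct (G i) as [Nzi _].
  set (K1 := ln (Rmax (C1 * Rabs (ff A i)) 1)).
  set (K2 := ln (Rmax C2 1) - ln (Rabs (ff δ i))).
  exists (Rabs K1 + Rabs K2).
  eapply ev_mono. apply (ev_and _ _ (ev_and _ _ HC1 HC2) (ev_and _ _ Nzi (ev_gt 0))).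
  intros t [[H1 H2] [H3 H4]].
  rewrite Dn_rpow in H1, H2 by auto.
  unfold lf.
  assert (Hfp : 0 < Rabs (Derive_n f i t)) by (apply Rabs_pos_lt; auto).
  pose proof (Rabs_pos K1). pose proof (Rle_abs K1). pose proof (Rabs_pos K2). pose proof (Rle_abs K2).
  pose proof (Rle_abs (- K2)) as HK2'. rewrite Rabs_Ropp in HK2'.
  pose proof (Rle_abs (- K1)) as HK1'. rewrite Rabs_Ropp in HK1'.
  split.
  - assert (Hff : 0 < Rabs (ff δ i)) by (apply Rabs_pos_lt, ff_nz; auto).
    rewrite Rabs_mult, (Rabs_pos_eq (Rpower _ _)) in H2 by (apply Rlt_le, Rpower_pos).
    assert (H2' : Rabs (ff δ i) * Rpower t (δ - INR i) <= Rmax C2 1 * Rabs (Derive_n f i t)).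
    { eapply Rle_trans. apply H2. apply Rmult_le_compat_r. lra. apply Rmax_l. }
    assert (Hm : 0 < Rmax C2 1) by (pose proof (Rmax_r C2 1); lra).
    apply ln_le in H2'. 2: { apply Rmult_lt_0_compat; auto. apply Rpower_pos. }
    rewrite !ln_mult, Rpower_ln in H2'; auto. 2: apply Rpower_pos.
    unfold K2 in *. lra.
  - assert (H1' : Rabs (Derive_n f i t) <= Rmax (C1 * Rabs (ff A i)) 1 * Rpower t (A - INR i)).
    { eapply Rle_trans. apply H1. rewrite Rabs_mult, (Rabs_pos_eq (Rpower _ _)) by (apply Rlt_le, Rpower_pos).
      rewrite <- Rmult_assoc. apply Rmult_le_compat_r. apply Rlt_le, Rpower_pos. apply Rmax_l. }
    assert (Hm : 0 < Rmax (C1 * Rabs (ff A i)) 1) by (pose proof (Rmax_r (C1 * Rabs (ff A i)) 1); lra).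
    apply ln_le in H1'; auto.
    rewrite !ln_mult, Rpower_ln in H1'; auto. 2: apply Rpower_pos.
    unfold K1 in *. lra.
Qed.
End Hardy5.

Lemma is_derive_lnabs (w : R -> R) (t dw : R) : is_derive w t dw -> w t <> 0 ->
  is_derive (fun s => ln (Rabs (w s))) t (dw / w t).
Proof.
  intros Hd Hz.
  assert (Ha : is_derive (fun s => Rabs (w s)) t (sign (w t) * dw)) by (apply is_derive_Rabs; auto).
  assert (Hp : 0 < Rabs (w t)) by (apply Rabs_pos_lt; auto).
  pose proof (is_derive_comp ln (fun s => Rabs (w s)) t (/ Rabs (w t)) _ (is_derive_ln _ Hp) Ha) as Hc.
  replace (dw / w t) with (scal (sign (w t) * dw) (/ Rabs (w t))). exact Hc.
  unfold scal; simpl; unfold mult; simpl.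
  destruct (Rlt_dec 0 (w t)) as [Hq|Hq].
  - rewrite sign_eq_1, Rabs_pos_eq by lra. field; auto.
  - rewrite sign_eq_m1, Rabs_left by lra. field; auto.
Qed.

Lemma lim_ln_abs (w : R -> R) : lim01 w -> ev (fun t => w t <> 0) ->
  is_lim (fun t => ln (Rabs (w t))) p_infty m_infty \/ is_lim (fun t => ln (Rabs (w t))) p_infty p_infty.
Proof.
  intros [Hw|Hw] Hnz.
  - left. apply is_lim_Rabs in Hw. simpl in Hw. rewrite Rabs_R0 in Hw.
    assert (Hi : is_lim (fun t => / Rabs (w t)) p_infty p_infty).
    { apply is_lim_Rinv_0_right; auto. eapply ev_mono. apply Hnz. intros t Ht. apply Rabs_pos_lt; auto. }
    assert (Hl : is_lim (fun t => ln (/ Rabs (w t))) p_infty p_infty).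
    { apply (is_lim_comp ln _ p_infty p_infty p_infty). apply is_lim_ln_p. auto. exists 0. intros; discriminate. }
    apply is_lim_opp in Hl. simpl in Hl.
    apply (is_lim_ev_ext (fun t => - ln (/ Rabs (w t)))); auto.
    eapply ev_mono. apply Hnz. intros t Ht. rewrite ln_Rinv. ring. apply Rabs_pos_lt; auto.
  - right. apply lim_abs_inf in Hw.
    apply (is_lim_comp ln _ p_infty p_infty p_infty). apply is_lim_ln_p. auto. exists 0. intros; discriminate.
Qed.

Lemma lim01_of (w : R -> R) :
  is_lim w p_infty m_infty \/ is_lim w p_infty p_infty -> lim01 w.
Proof. intros [H|H]; right; auto. Qed.

Lemma lim_between (w : R -> R) (L : Rbar) (a b : R) : 0 < a ->
  is_lim w p_infty L -> ev (fun t => a <= Rabs (w t) <= b) -> exists l, L = Finite l /\ l <> 0.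
Proof.
  intros Ha HL Hb.
  pose proof (is_lim_Rabs _ _ _ HL) as HA.
  assert (H1 : Rbar_le a (Rbar_abs L)).
  { apply (is_lim_le_loc (fun _ => a) (fun t => Rabs (w t)) p_infty); auto.
    eapply ev_mono. apply Hb. intros t Ht; apply Ht. apply is_lim_const. }
  assert (H2 : Rbar_le (Rbar_abs L) b).
  { apply (is_lim_le_loc (fun t => Rabs (w t)) (fun _ => b) p_infty); auto.
    eapply ev_mono. apply Hb. intros t Ht; apply Ht. apply is_lim_const. }
  destruct L as [l| |]; simpl in *; try contradiction.
  exists l. split; auto. intros ->. rewrite Rabs_R0 in H1. lra.
Qed.

Section Hardy6.
Variable H : (R -> R) -> Prop.
Hypothesis HH : GoodHardyField H.

Lemma sim_of_bounds (f g : R -> R) (C1 C2 : R) : H f -> H g ->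
  ev (fun t => f t <> 0) -> ev (fun t => g t <> 0) ->
  ev (fun t => Rabs (f t) <= C1 * Rabs (g t)) -> ev (fun t => Rabs (g t) <= C2 * Rabs (f t)) ->
  sim f g.
Proof.
  intros Hf Hg Nf Ng B1 B2.
  destruct (H_lim H HH (fun t => f t / g t)) as [L HL]. apply H_div; auto.
  destruct (ev_and _ _ (ev_and _ _ Nf Ng) (ev_and _ _ B1 B2)) as [M HM].
  assert (HC2 : 0 < C2).
  { destruct (HM (M+1) ltac:(lra)) as [[H1 H2] [H3 H4]].
    pose proof (Rabs_pos_lt _ H1). pose proof (Rabs_pos_lt _ H2).
    destruct (Rle_lt_dec C2 0); auto. assert (C2 * Rabs (f (M+1)) <= 0) by nra. lra. }
  destruct (lim_between (fun t => f t / g t) L (/ C2) C1) as [l [-> Hl]]; auto.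
  apply Rinv_0_lt_compat; auto.
  exists M. intros t Ht. destruct (HM t Ht) as [[H1 H2] [H3 H4]].
  pose proof (Rabs_pos_lt _ H1). pose proof (Rabs_pos_lt _ H2).
  rewrite Rabs_div by auto. split.
  - apply Rmult_le_reg_r with (Rabs (g t)); auto. unfold Rdiv. rewrite Rmult_assoc, Rinv_l, Rmult_1_r by lra.
    apply Rmult_le_reg_l with C2; auto. rewrite <- Rmult_assoc, Rinv_r, Rmult_1_l by lra. lra.
  - apply Rmult_le_reg_r with (Rabs (g t)); auto. unfold Rdiv. rewrite Rmult_assoc, Rinv_l, Rmult_1_r by lra. lra.
  - exists l. split; auto.
Qed.

Lemma logder_bound (f : R -> R) (δ A : R) : H f -> 0 < δ -> (forall i, good f i) ->
  (forall i, exists K, ev (fun t => (δ - INR i) * ln t - K <= lf f i t /\ lf f i t <= (A - INR i) * ln t + K)) ->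
  forall j, exists K, ev (fun t => lf f (S j) t <= lf f j t - ln t + K).
Proof.
  intros Hf Hδ G B j.
  destruct (G j) as [N0 L0]. destruct (G (S j)) as [N1 _].
  set (w := fun t => t * (Derive_n f (S j) t / Derive_n f j t)).
  assert (Hw : H w).
  { unfold w. apply (H_mult H HH). apply (H_id H HH). apply (H_div H HH); auto; apply (H_Dn H HH); auto. }
  destruct (H_lim_abs H HH w Hw) as [L HL].
  destruct (abs_lim_cases w L HL) as [[l Hl]|Hinf].
  - exists (ln (Rmax l 1)).
    eapply ev_mono. apply (ev_and _ _ (ev_and _ _ Hl N0) (ev_and _ _ N1 (ev_gt 0))).
    intros t [[H1 H2] [H3 H4]]. unfold lf.
    assert (P0 : 0 < Rabs (Derive_n f j t)) by (apply Rabs_pos_lt; auto).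
    assert (P1 : 0 < Rabs (Derive_n f (S j) t)) by (apply Rabs_pos_lt; auto).
    assert (Hm : 0 < Rmax l 1) by (pose proof (Rmax_r l 1); lra).
    assert (Hb : Rabs (Derive_n f (S j) t) * t <= Rmax l 1 * Rabs (Derive_n f j t)).
    { unfold w in H1. rewrite Rabs_mult, Rabs_div, (Rabs_pos_eq t) in H1 by lra.
      apply Rmult_le_compat_r with (r := Rabs (Derive_n f j t)) in H1; [|lra].
      replace (t * (Rabs (Derive_n f (S j) t) / Rabs (Derive_n f j t)) * Rabs (Derive_n f j t))
        with (Rabs (Derive_n f (S j) t) * t) in H1 by (field; lra).
      eapply Rle_trans. apply H1. apply Rmult_le_compat_r; [lra|apply Rmax_l]. }
    apply ln_le in Hb; [|nra]. rewrite !ln_mult in Hb; lra.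
  - exfalso.
    destruct (B j) as [K HK].
    set (Bc := Rabs (δ - INR j) + Rabs (A - INR j) + 1).
    assert (HB : 1 <= Bc) by (unfold Bc; pose proof (Rabs_pos (δ - INR j)); pose proof (Rabs_pos (A - INR j)); lra).
    set (eps := / (4 * Bc)).
    assert (He : 0 < eps) by (unfold eps; apply Rinv_0_lt_compat; lra).
    rewrite lim_pinf in Hinf.
    destruct (ev_and _ _ (ev_and _ _ (H_isder H HH f j Hf) (ev_and _ _ N0 N1))
              (ev_and _ _ (Hinf (/ eps)) (ev_gt 1))) as [M HM].
    assert (T := transfer1 (fun t => ln t) (lf f j) (fun t => / t)
        (fun t => Derive_n f (S j) t / Derive_n f j t) M eps ltac:(lra)).
    assert (Hev : ev (fun t => Rabs (ln t) <= (eps + eps) * Rabs (lf f j t))).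
    { apply T.
    + intros t Ht. apply is_derive_ln. destruct (HM t Ht) as [_ [_ H2]]. lra.
    + intros t Ht. unfold lf. apply is_derive_lnabs. apply HM; auto. apply HM; auto.
    + intros t Ht. destruct (HM t Ht) as [[_ [H1 H2]] _]. unfold Rdiv. apply Rmult_integral_contrapositive.
      split; auto. apply Rinv_neq_0_compat; auto.
    + intros t Ht. destruct (HM t Ht) as [[_ [H1 H2]] [H3 H4]]. unfold w in H3.
      rewrite Rabs_mult, (Rabs_pos_eq t) in H3 by lra.
      rewrite Rabs_pos_eq by (apply Rlt_le, Rinv_0_lt_compat; lra).
      apply Rmult_lt_compat_l with (r := eps) in H3; auto.
      rewrite Rinv_r in H3 by lra.
      apply Rmult_le_reg_l with t. lra. rewrite Rinv_r by lra.
      replace (t * (eps * Rabs (Derive_n f (S j) t / Derive_n f j t))) with (eps * (t * Rabs (Derive_n f (S j) t / Derive_n f j t))) by ring.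
      lra.
    + right; left. apply is_lim_ln_p.
    + apply lim01_of. apply lim_ln_abs; auto.
    + auto. }
    pose proof is_lim_ln_p as Hln. rewrite lim_pinf in Hln.
    destruct (ev_and _ _ (ev_and _ _ Hev HK) (ev_and _ _ (Hln (Rabs K / Bc + 1)) (ev_gt 1))) as [M3 HM3].
    destruct (HM3 (M3 + 1) ltac:(lra)) as [[H1 [H2 H3]] [H4 H5]].
    set (t := M3 + 1) in *. set (Lt := ln t) in *. set (X := lf f j t) in *.
    assert (HL0 : 0 <= Lt) by (unfold Lt; rewrite <- ln_1; apply ln_le; lra).
    rewrite (Rabs_pos_eq Lt) in H1 by auto.
    assert (HX : Rabs X <= Bc * Lt + Rabs K).
    { pose proof (Rle_abs (A - INR j)) as Q1. pose proof (Rle_abs (- (δ - INR j))) as Q2. rewrite Rabs_Ropp in Q2.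
      pose proof (Rle_abs K) as Q3. pose proof (Rle_abs (- K)) as Q4. rewrite Rabs_Ropp in Q4.
      assert ((A - INR j) * Lt <= Rabs (A - INR j) * Lt) by (apply Rmult_le_compat_r; auto).
      assert (- (δ - INR j) * Lt <= Rabs (δ - INR j) * Lt) by (apply Rmult_le_compat_r; auto).
      assert (0 <= Rabs (A - INR j) * Lt) by (apply Rmult_le_pos; auto; apply Rabs_pos).
      assert (0 <= Rabs (δ - INR j) * Lt) by (apply Rmult_le_pos; auto; apply Rabs_pos).
      unfold Bc. apply Rabs_le. lra. }
    assert (Hm : (eps + eps) * Rabs X <= (eps + eps) * (Bc * Lt + Rabs K)) by (apply Rmult_le_compat_l; lra).
    assert (Heq : (eps + eps) * (Bc * Lt + Rabs K) = Lt / 2 + Rabs K / Bc / 2) by (unfold eps; field; lra).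
    lra.
Qed.
End Hardy6.

Definition LD (f : R -> R) (k : nat) (t : R) : R := - (1 / INR k) * lf f k t.

Lemma dscale_LD f k t : dscale f k t = exp (LD f k t).
Proof. reflexivity. Qed.

Lemma dscale_pos f k t : 0 < dscale f k t.
Proof. rewrite dscale_LD. apply exp_pos. Qed.

Record Prof (H : (R -> R) -> Prop) (f : R -> R) (δ A : R) : Prop := {
  pf_H : H f;
  pf_d : 0 < δ;
  pf_dA : δ < A;
  pf_good : forall i, good f i;
  pf_b : forall i, exists K, ev (fun t => (δ - INR i) * ln t - K <= lf f i t /\ lf f i t <= (A - INR i) * ln t + K);
  pf_ld : forall j, exists K, ev (fun t => lf f (S j) t <= lf f j t - ln t + K)
}.

Lemma get_prof H (HH : GoodHardyField H) f d1 : H f -> strongly_nonpoly f -> 0 < d1 ->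
  ll (fun t => Rpower t d1) f -> exists δ A, Prof H f δ A.
Proof.
  intros Hf Snp Hd Hl. destruct (profile H HH f d1 Hf Snp Hd Hl) as [δ [A [H1 [H2 [H3 H4]]]]].
  exists δ, A. constructor; auto. apply (logder_bound H HH f δ A); auto.
Qed.

Lemma lim_inf_scal (c : R) (y : R -> R) : c <> 0 ->
  is_lim y p_infty m_infty \/ is_lim y p_infty p_infty ->
  is_lim (fun t => c * y t) p_infty m_infty \/ is_lim (fun t => c * y t) p_infty p_infty.
Proof.
  intros Hc Hy.
  assert (Hy' : is_lim y p_infty p_infty \/ is_lim y p_infty m_infty) by tauto.
  destruct (lim01_scal c y Hc (or_intror Hy')) as [H0|H0]; [|tauto].
  exfalso. assert (Hz : is_lim (fun t => / c * (c * y t)) p_infty (Rbar_mult (/ c) 0)) by (apply is_lim_scal_l; auto).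
  simpl in Hz. rewrite Rmult_0_r in Hz.
  assert (Hz' : is_lim y p_infty 0).
  { eapply is_lim_ext; [|apply Hz]. intros t. simpl. field. auto. }
  destruct Hy as [Hy|Hy]; pose proof (lim_uniq _ _ _ Hz' Hy); discriminate.
Qed.

Section Hardy7.
Variable H : (R -> R) -> Prop.
Hypothesis HH : GoodHardyField H.

Lemma H_exp_comp (y : R -> R) : H y ->
  is_lim y p_infty m_infty \/ is_lim y p_infty p_infty -> H (fun t => exp (y t)).
Proof.
  intros Hy [Hl|Hl].
  - assert (Hn : is_lim (fun t => - y t) p_infty p_infty).
    { apply is_lim_opp in Hl. exact Hl. }
    assert (He : H (fun t => exp (- y t))).
    { apply (ghf_comp H HH (fun t => exp t)). apply (H_expf H HH). apply (H_scal H HH (-1)) in Hy.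
      apply (H_germ H HH _ _ Hy). exists 0. intros; ring. auto. }
    apply (H_germ H HH (fun t => / exp (- y t))). apply (H_inv_ev H HH); auto.
    exists 0. intros t _. pose proof (exp_pos (- y t)). lra.
    exists 0. intros t _. rewrite exp_Ropp, Rinv_inv. auto.
  - apply (ghf_comp H HH (fun t => exp t)). apply (H_expf H HH). auto. auto.
Qed.

Lemma H_ln_comp (w : R -> R) : H w -> ev (fun t => 0 < w t) ->
  is_lim w p_infty 0 \/ is_lim w p_infty p_infty -> H (fun t => ln (w t)).
Proof.
  intros Hw Hp [Hl|Hl].
  - assert (Hi : is_lim (fun t => / w t) p_infty p_infty) by (apply is_lim_Rinv_0_right; auto).
    assert (Hli : H (fun t => ln (/ w t))).
    { apply (ghf_comp H HH (fun t => ln t)). apply (H_ln H HH). apply (H_inv_ev H HH); auto.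
      eapply ev_mono. apply Hp. intros; lra. auto. }
    apply (H_germ H HH (fun t => (-1) * ln (/ w t))). apply (H_scal H HH). auto.
    eapply ev_mono. apply Hp. intros t Ht. rewrite ln_Rinv; auto. ring.
  - apply (ghf_comp H HH (fun t => ln t)). apply (H_ln H HH). auto. auto.
Qed.

Lemma H_dscale f δ A k : Prof H f δ A -> (1 <= k)%nat -> H (dscale f k).
Proof.
  intros P Hk. destruct (pf_good _ _ _ _ P k) as [Nz L0].
  assert (Hk' : 0 < INR k) by (apply lt_0_INR; lia).
  assert (Hlf : H (lf f k)).
  { unfold lf. apply (H_ln_comp (fun t => Rabs (Derive_n f k t))).
    apply (H_abs H HH). apply (H_Dn H HH). apply (pf_H _ _ _ _ P).
    eapply ev_mono. apply Nz. intros; apply Rabs_pos_lt; auto.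
    destruct L0 as [L0|L0].
    - left. apply lim_abs0. auto.
    - right. apply lim_abs_inf. auto. }
  apply (H_germ H HH (fun t => exp (LD f k t))).
  - apply H_exp_comp. unfold LD. apply (H_scal H HH). auto.
    apply lim_inf_scal. apply Ropp_neq_0_compat. unfold Rdiv. rewrite Rmult_1_l. apply Rinv_neq_0_compat. lra.
    apply lim_ln_abs; auto.
  - exists 0. intros; rewrite dscale_LD; auto.
Qed.

End Hardy7.

Lemma LD_bounds H f δ A k : Prof H f δ A -> (1 <= k)%nat ->
  exists K, ev (fun t => (1 - A / INR k) * ln t - K <= LD f k t /\ LD f k t <= (1 - δ / INR k) * ln t + K).
Proof.
  intros P Hk. destruct (pf_b _ _ _ _ P k) as [K HK].
  assert (Hr : 1 <= INR k) by (apply (le_INR 1); lia).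
  exists (Rabs K / INR k).
  eapply ev_mono. apply HK. intros t [H1 H2]. unfold LD.
  set (r := INR k) in *. set (X := lf f k t) in *. set (L := ln t) in *.
  pose proof (Rle_abs K). pose proof (Rle_abs (-K)) as Q. rewrite Rabs_Ropp in Q.
  assert (Hri : 0 < / r) by (apply Rinv_0_lt_compat; lra).
  split.
  - assert (/ r * X <= / r * ((A - r) * L + K)) by (apply Rmult_le_compat_l; lra).
    assert (/ r * K <= / r * Rabs K) by (apply Rmult_le_compat_l; lra).
    assert (E : / r * ((A - r) * L + K) = - ((1 - A / r) * L) + / r * K) by (field; lra).
    replace (- (1 / r) * X) with (- (/ r * X)) by (field; lra).
    unfold Rdiv at 2. rewrite (Rmult_comm (Rabs K)). lra.
  - assert (/ r * ((δ - r) * L - K) <= / r * X) by (apply Rmult_le_compat_l; lra).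
    assert (/ r * K <= / r * Rabs K) by (apply Rmult_le_compat_l; lra).
    assert (E : / r * ((δ - r) * L - K) = - ((1 - δ / r) * L) + / r * (- K)) by (field; lra).
    replace (- (1 / r) * X) with (- (/ r * X)) by (field; lra).
    unfold Rdiv at 2. rewrite (Rmult_comm (Rabs K)). lra.
Qed.

Lemma LD_step H f δ A k : Prof H f δ A -> (1 <= k)%nat ->
  is_lim (fun t => LD f k t - LD f (S k) t) p_infty m_infty.
Proof.
  intros P Hk. destruct (pf_b _ _ _ _ P k) as [K0 HK0]. destruct (pf_ld _ _ _ _ P k) as [K HK].
  pose proof (pf_d _ _ _ _ P) as Hd.
  assert (Hr : 1 <= INR k) by (apply (le_INR 1); lia).
  set (r := INR k) in *.
  set (p := / (r + 1)). set (q := / (r * (r + 1))).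
  assert (Hp : 0 < p) by (unfold p; apply Rinv_0_lt_compat; lra).
  assert (Hq : 0 < q) by (unfold q; apply Rinv_0_lt_compat; nra).
  apply (ln_lin_m _ (- (q * δ)) (q * K0 + p * K)). nra.
  eapply ev_mono. apply (ev_and _ _ HK0 HK). intros t [[H1 H2] H3]. unfold LD.
  rewrite S_INR. fold r.
  set (X := lf f k t) in *. set (Y := lf f (S k) t) in *. set (L := ln t) in *.
  assert (E1 : - (1 / r) * X + - (- (1 / (r + 1)) * Y) = - (p + q) * X + p * Y) by (unfold p, q; field; lra).
  unfold Rminus. rewrite E1.
  assert (p * Y <= p * (X - L + K)) by (apply Rmult_le_compat_l; lra).
  assert (q * ((δ - r) * L - K0) <= q * X) by (apply Rmult_le_compat_l; lra).
  assert (E2 : q * ((δ - r) * L - K0) = q * δ * L - p * L - q * K0) by (unfold p, q; field; lra).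
  lra.
Qed.

Lemma LD_chain H f δ A k : Prof H f δ A -> (1 <= k)%nat ->
  forall n, ev (fun t => LD f k t <= LD f (k + n) t).
Proof.
  intros P Hk n. induction n.
  - exists 0. intros. rewrite Nat.add_0_r. lra.
  - pose proof (LD_step H f δ A (k + n) P ltac:(lia)) as Hs. rewrite lim_minf in Hs.
    eapply ev_mono. apply (ev_and _ _ IHn (Hs 0)). intros t [H1 H2].
    rewrite Nat.add_succ_r. lra.
Qed.

Lemma admissible_big H f δ A k : Prof H f δ A -> A < INR k -> admissible f k.
Proof.
  intros P Hk. destruct (pf_b _ _ _ _ P k) as [K HK]. destruct (pf_good _ _ _ _ P k) as [Nz _].
  assert (Hl : is_lim (lf f k) p_infty m_infty).
  { apply (ln_lin_m _ (A - INR k) K). lra. eapply ev_mono. apply HK. intros t Ht; apply Ht. }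
  unfold admissible. apply lim_abs0.
  apply (is_lim_ev_ext (fun t => exp (lf f k t))).
  - eapply ev_mono. apply Nz. intros t Ht. unfold lf. apply exp_ln. apply Rabs_pos_lt; auto.
  - apply (is_lim_comp exp (lf f k) p_infty 0 m_infty). apply is_lim_exp_m. auto.
    exists 0. intros; discriminate.
Qed.

Lemma exp_lim_m (y : R -> R) : is_lim y p_infty m_infty -> is_lim (fun t => exp (y t)) p_infty 0.
Proof. intros Hy. apply (is_lim_comp exp y p_infty 0 m_infty). apply is_lim_exp_m. auto. exists 0; intros; discriminate. Qed.

Lemma exp_lim_p (y : R -> R) : is_lim y p_infty p_infty -> is_lim (fun t => exp (y t)) p_infty p_infty.
Proof. intros Hy. apply (is_lim_comp exp y p_infty p_infty p_infty). apply is_lim_exp_p. auto. exists 0; intros; discriminate. Qed.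

Lemma exp_div a b : exp a / exp b = exp (a - b).
Proof. unfold Rminus. rewrite exp_plus, exp_Ropp. reflexivity. Qed.

Lemma dscale_div f k g l t : dscale f k t / dscale g l t = exp (LD f k t - LD g l t).
Proof. rewrite !dscale_LD. apply exp_div. Qed.

Lemma m_scal_pos (c : R) (y : R -> R) : 0 < c -> is_lim y p_infty m_infty -> is_lim (fun t => c * y t) p_infty m_infty.
Proof.
  intros Hc Hy. rewrite lim_minf in *. intros M. eapply ev_mono. apply (Hy (M / c)). intros t Ht.
  cbv beta in *. apply Rmult_lt_compat_l with (r := c) in Ht; auto.
  replace (c * (M / c)) with M in Ht by (field; lra). lra.
Qed.

Lemma not_adm0 H f δ A : Prof H f δ A -> ~ admissible f 0.
Proof.
  intros P Ha. destruct (pf_b _ _ _ _ P 0) as [K HK]. pose proof (pf_d _ _ _ _ P) as Hd.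
  destruct (pf_good _ _ _ _ P 0) as [Nz _].
  assert (Hl : is_lim (lf f 0) p_infty p_infty).
  { apply (ln_lin_p _ δ (-K)); auto. eapply ev_mono. apply HK. intros t [H1 _]. simpl in H1. lra. }
  unfold admissible in Ha. rewrite lim_fin in Ha. rewrite lim_pinf in Hl.
  destruct (ev_and _ _ (ev_and _ _ (Ha 1 ltac:(lra)) (Hl 0)) Nz) as [M HM].
  destruct (HM (M+1) ltac:(lra)) as [[H1 H2] H3]. unfold lf in H2.
  rewrite Rminus_0_r in H1. rewrite <- ln_1 in H2.
  apply ln_lt_inv in H2; [lra|lra|]. apply Rabs_pos_lt; auto.
Qed.

Lemma self_S H (HH : GoodHardyField H) f δ A k : Prof H f δ A -> (1 <= k)%nat -> Sset H f k (dscale f k).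
Proof.
  intros P Hk. split; [|split].
  - apply (H_dscale H HH f δ A); auto.
  - exists 1. split. intro Hc; injection Hc; lra.
    apply (is_lim_ext (fun _ => 1)). intros t. unfold Rdiv. rewrite Rinv_r. rewrite Rabs_R1; auto.
    pose proof (dscale_pos f k t); lra. apply is_lim_const.
  - unfold prec. apply (is_lim_ext (fun t => exp (LD f k t - LD f (S k) t))).
    intros t. rewrite dscale_div. auto.
    apply exp_lim_m. apply (LD_step H f δ A); auto.
Qed.

Lemma F2 H (HH : GoodHardyField H) f g δf Af δg Ag : Prof H f δf Af -> Prof H g δg Ag ->
  (exists C, ev (fun t => Rabs (g t) <= C * Rabs (f t))) ->
  forall i, exists C, ev (fun t => Rabs (Derive_n g i t) <= C * Rabs (Derive_n f i t)).
Proof.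
  intros Pf Pg Hb. apply (up_transfer H HH); auto.
  apply (pf_H _ _ _ _ Pf). apply (pf_H _ _ _ _ Pg). apply (pf_good _ _ _ _ Pf). apply (pf_good _ _ _ _ Pg).
Qed.

Lemma LD_diff H f g δf Af δg Ag j C : Prof H f δf Af -> Prof H g δg Ag -> (1 <= j)%nat ->
  ev (fun t => Rabs (Derive_n g j t) <= C * Rabs (Derive_n f j t)) ->
  ev (fun t => LD f j t - LD g j t <= ln (Rmax C 1) / INR j).
Proof.
  intros Pf Pg Hj HC. destruct (pf_good _ _ _ _ Pf j) as [Nf _]. destruct (pf_good _ _ _ _ Pg j) as [Ng _].
  assert (Hr : 0 < INR j) by (apply lt_0_INR; lia).
  eapply ev_mono. apply (ev_and _ _ HC (ev_and _ _ Nf Ng)). intros t [H1 [H2 H3]].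
  unfold LD, lf.
  assert (P1 : 0 < Rabs (Derive_n f j t)) by (apply Rabs_pos_lt; auto).
  assert (P2 : 0 < Rabs (Derive_n g j t)) by (apply Rabs_pos_lt; auto).
  assert (Hm : 0 < Rmax C 1) by (pose proof (Rmax_r C 1); lra).
  assert (H1' : Rabs (Derive_n g j t) <= Rmax C 1 * Rabs (Derive_n f j t)).
  { eapply Rle_trans. apply H1. apply Rmult_le_compat_r. lra. apply Rmax_l. }
  apply ln_le in H1'; auto. rewrite ln_mult in H1'; auto.
  assert (E : - (1 / INR j) * ln (Rabs (Derive_n f j t)) - - (1 / INR j) * ln (Rabs (Derive_n g j t))
     = / INR j * (ln (Rabs (Derive_n g j t)) - ln (Rabs (Derive_n f j t)))) by (field; lra).
  rewrite E. replace (ln (Rmax C 1) / INR j) with (/ INR j * ln (Rmax C 1)) by (field; lra).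
  apply Rmult_le_compat_l. left; apply Rinv_0_lt_compat; auto. lra.
Qed.

Section Key.
Variable H : (R -> R) -> Prop.
Hypothesis HH : GoodHardyField H.

Lemma KEY f g δf Af δg Ag k : Prof H f δf Af -> Prof H g δg Ag -> (1 <= k)%nat ->
  (exists C, ev (fun t => Rabs (g t) <= C * Rabs (f t))) ->
  preceq (dscale g k) (dscale f k) -> sim f g.
Proof.
  intros Pf Pg Hk Hgf [L [HL0 HL]].
  destruct (pf_good _ _ _ _ Pf k) as [Nf _]. destruct (pf_good _ _ _ _ Pg k) as [Ng _].
  assert (Hr : 0 < INR k) by (apply lt_0_INR; lia).
  set (r := fun t => Derive_n g k t / Derive_n f k t).
  assert (Nr : ev (fun t => r t <> 0)).
  { eapply ev_mono. apply (ev_and _ _ Nf Ng). intros t [H1 H2]. unfold r, Rdiv.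
    apply Rmult_integral_contrapositive. split; auto. apply Rinv_neq_0_compat; auto. }
  assert (Hrr : H r) by (apply (H_div H HH); auto; apply (H_Dn H HH); [apply (pf_H _ _ _ _ Pg)|apply (pf_H _ _ _ _ Pf)]).
  destruct (H_lim_abs H HH r Hrr) as [M HM].
  assert (Hlow : exists c, 0 < c /\ ev (fun t => c <= Rabs (r t))).
  { destruct M as [m| |].
    - assert (Hm0 : Rbar_le 0 m).
      { apply (is_lim_le_loc (fun _ => 0) (fun t => Rabs (r t)) p_infty); auto.
        exists 0. intros; apply Rabs_pos. apply is_lim_const. }
      simpl in Hm0. destruct Hm0 as [Hm0|Hm0].
      + exists (m / 2). split. lra. rewrite lim_fin in HM. eapply ev_mono. apply (HM (m/2) ltac:(lra)).
        intros t Ht. apply Rabs_def2 in Ht. lra.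
      + exfalso. subst m. apply HL0.
        assert (Hr0 : is_lim r p_infty 0) by (apply lim_abs0; auto).
        assert (Hln : is_lim (fun t => ln (Rabs (r t))) p_infty m_infty).
        { destruct (lim_ln_abs r (or_introl Hr0) Nr) as [Hq|Hq]; auto.
          exfalso. apply is_lim_Rabs in Hr0. simpl in Hr0. rewrite Rabs_R0 in Hr0.
          rewrite lim_fin in Hr0. rewrite lim_pinf in Hq.
          destruct (ev_and _ _ (ev_and _ _ (Hr0 1 ltac:(lra)) (Hq 0)) Nr) as [M0 HM0].
          destruct (HM0 (M0+1) ltac:(lra)) as [[H1 H2] H3]. rewrite Rminus_0_r, Rabs_Rabsolu in H1.
          rewrite <- ln_1 in H2. apply ln_lt_inv in H2; [lra|lra|apply Rabs_pos_lt; auto]. }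
        apply m_scal_pos with (c := / INR k) in Hln; [|apply Rinv_0_lt_compat; auto].
        apply exp_lim_m in Hln.
        apply (lim_uniq (fun t => Rabs (dscale f k t / dscale g k t))); auto.
        apply (is_lim_ev_ext (fun t => exp (/ INR k * ln (Rabs (r t))))); auto.
        eapply ev_mono. apply (ev_and _ _ Nf Ng). intros t [H1 H2].
        rewrite dscale_div, (Rabs_pos_eq (exp _)) by (apply Rlt_le, exp_pos). f_equal.
        unfold LD, lf, r. rewrite Rabs_div by auto. rewrite ln_div by (apply Rabs_pos_lt; auto).
        field. lra.
    - exists 1. split. lra. rewrite lim_pinf in HM. eapply ev_mono. apply (HM 1). intros; lra.
    - exfalso. assert (Hle : Rbar_le 0 m_infty).
      { apply (is_lim_le_loc (fun _ => 0) (fun t => Rabs (r t)) p_infty); auto.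
        exists 0. intros; apply Rabs_pos. apply is_lim_const. }
      simpl in Hle. auto. }
  destruct Hlow as [c [Hc Hlow]].
  assert (Hfg : exists C, ev (fun t => Rabs (f t) <= C * Rabs (g t))).
  { destruct (down_transfer (Derive_n f) (Derive_n g) k) as [C HC].
    - intros i _. apply (H_isder H HH). apply (pf_H _ _ _ _ Pf).
    - intros i _. apply (H_isder H HH). apply (pf_H _ _ _ _ Pg).
    - intros i _. apply (pf_good _ _ _ _ Pg).
    - intros i _. apply (pf_good _ _ _ _ Pf).
    - intros i _. apply (pf_good _ _ _ _ Pg).
    - exists (/ c). eapply ev_mono. apply (ev_and _ _ Hlow Nf). intros t [H1 H2].
      unfold r in H1. rewrite Rabs_div in H1 by auto.
      assert (0 < Rabs (Derive_n f k t)) by (apply Rabs_pos_lt; auto).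
      apply Rmult_le_compat_r with (r := Rabs (Derive_n f k t)) in H1; [|lra].
      unfold Rdiv in H1. rewrite Rmult_assoc, Rinv_l, Rmult_1_r in H1 by lra.
      apply Rmult_le_reg_l with c; auto. rewrite <- Rmult_assoc, Rinv_r, Rmult_1_l by lra. auto.
    - exists C. simpl in HC. auto. }
  destruct Hfg as [C1 HC1]. destruct Hgf as [C2 HC2].
  destruct (pf_good _ _ _ _ Pf 0) as [Nf0 _]. destruct (pf_good _ _ _ _ Pg 0) as [Ng0 _].
  apply (sim_of_bounds H HH f g C1 C2); auto. apply (pf_H _ _ _ _ Pf). apply (pf_H _ _ _ _ Pg).
Qed.
End Key.

Lemma exp_le_mono a b : a <= b -> exp a <= exp b.
Proof. intros [Hl| ->]. left; apply exp_increasing; auto. right; auto. Qed.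

Lemma scale1 (D1 D2 h : R -> R) (ρ : R) : (forall t, 0 < D1 t) -> (forall t, 0 < D2 t) -> 0 < ρ ->
  is_lim (fun t => D1 t / D2 t) p_infty ρ ->
  (preceq D1 h -> preceq D2 h) /\ (prec h D1 -> prec h D2).
Proof.
  intros P1 P2 Hρ Hl. split.
  - intros [L [HL0 HL]]. exists (Rbar_mult L ρ). split.
    + destruct L as [l| |]; simpl.
      * intro He. injection He. intro He'. apply Rmult_integral in He'. destruct He' as [He'|He'].
        apply HL0; subst; auto. lra.
      * unfold Rbar_mult'. destruct (Rle_dec 0 ρ); [|lra]. destruct (Rle_lt_or_eq_dec 0 ρ r); [discriminate|lra].
      * unfold Rbar_mult'. destruct (Rle_dec 0 ρ); [|lra]. destruct (Rle_lt_or_eq_dec 0 ρ r); [discriminate|lra].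
    + apply (is_lim_ext (fun t => Rabs (h t / D1 t) * (D1 t / D2 t))).
      * intros t. pose proof (P1 t). pose proof (P2 t). rewrite !Rabs_div by lra.
        rewrite (Rabs_pos_eq (D1 t)), (Rabs_pos_eq (D2 t)) by lra. field. lra.
      * apply is_lim_mult; auto. destruct L; simpl; auto; lra.
  - intros Hp. unfold prec in *.
    apply (is_lim_ext (fun t => (h t / D1 t) * (D1 t / D2 t))).
    + intros t. pose proof (P1 t). pose proof (P2 t). field. lra.
    + replace (Finite 0) with (Rbar_mult 0 ρ). apply is_lim_mult; auto. simpl; auto.
      simpl. rewrite Rmult_0_l. auto.
Qed.

Lemma scale_equiv (D1 D2 h : R -> R) (ρ : R) : (forall t, 0 < D1 t) -> (forall t, 0 < D2 t) -> 0 < ρ ->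
  is_lim (fun t => D1 t / D2 t) p_infty ρ ->
  (preceq D1 h <-> preceq D2 h) /\ (prec h D1 <-> prec h D2).
Proof.
  intros P1 P2 Hρ Hl.
  assert (Hl' : is_lim (fun t => D2 t / D1 t) p_infty (/ ρ)).
  { apply (is_lim_ext (fun t => / (D1 t / D2 t))). intros t. pose proof (P1 t). pose proof (P2 t). field. lra.
    apply (is_lim_inv _ _ (Finite ρ)) in Hl. exact Hl. intro He; injection He; lra. }
  destruct (scale1 D1 D2 h ρ) as [A1 A2]; auto.
  destruct (scale1 D2 D1 h (/ ρ)) as [B1 B2]; auto. apply Rinv_0_lt_compat; auto.
  split; split; auto.
Qed.

Lemma search (P : nat -> Prop) a n : ~ P a -> P (a + n)%nat -> exists l, (a <= l)%nat /\ ~ P l /\ P (S l).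
Proof.
  intros Ha. induction n; intros Hn.
  - rewrite Nat.add_0_r in Hn. contradiction.
  - destruct (classic (P (a + n)%nat)) as [Hp|Hp]. auto.
    exists (a + n)%nat. split. lia. split; auto. rewrite <- Nat.add_succ_r. auto.
Qed.

Lemma ratio_lim H (HH : GoodHardyField H) f g δf Af δg Ag j : Prof H f δf Af -> Prof H g δg Ag -> (1 <= j)%nat ->
  (exists C, ev (fun t => Rabs (g t) <= C * Rabs (f t))) ->
  (exists C, ev (fun t => Rabs (f t) <= C * Rabs (g t))) ->
  exists ρ, 0 < ρ /\ is_lim (fun t => dscale f j t / dscale g j t) p_infty ρ.
Proof.
  intros Pf Pg Hj B1 B2.
  destruct (F2 H HH f g δf Af δg Ag Pf Pg B1 j) as [C1 HC1].
  destruct (F2 H HH g f δg Ag δf Af Pg Pf B2 j) as [C2 HC2].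
  pose proof (LD_diff H f g δf Af δg Ag j C1 Pf Pg Hj HC1) as D1.
  pose proof (LD_diff H g f δg Ag δf Af j C2 Pg Pf Hj HC2) as D2.
  assert (Hr : H (fun t => dscale f j t / dscale g j t)).
  { apply (H_div H HH). apply (H_dscale H HH f δf Af); auto. apply (H_dscale H HH g δg Ag); auto.
    exists 0. intros t _. pose proof (dscale_pos g j t). lra. }
  destruct (H_lim H HH _ Hr) as [L HL].
  destruct (lim_between (fun t => dscale f j t / dscale g j t) L (exp (- (ln (Rmax C2 1) / INR j))) (exp (ln (Rmax C1 1) / INR j))) as [l [-> Hl]]; auto.
  apply exp_pos.
  - eapply ev_mono. apply (ev_and _ _ D1 D2). intros t [H1 H2].
    rewrite dscale_div, Rabs_pos_eq by (apply Rlt_le, exp_pos). split; apply exp_le_mono; lra.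
  - exists l. split; auto.
    assert (Hle : Rbar_le 0 l).
    { apply (is_lim_le_loc (fun _ => 0) (fun t => dscale f j t / dscale g j t) p_infty); auto.
      exists 0. intros t _. pose proof (dscale_pos f j t). pose proof (dscale_pos g j t).
      apply Rlt_le, Rdiv_lt_0_compat; auto. apply is_lim_const. }
    simpl in Hle. lra.
Qed.

Theorem propositionA4 (H : (R -> R) -> Prop) (HH : GoodHardyField H)
  (f g : R -> R) (Hf : H f) (Hg : H g)
  (snf : strongly_nonpoly f) (sng : strongly_nonpoly g)
  (d1 d2 : R) (hd1 : 0 < d1) (hd2 : 0 < d2)
  (hf1 : ll (fun t => Rpower t d1) f) (hg2 : ll (fun t => Rpower t d2) g)
  (hgf : ll g f) :
  ((exists k : nat, admissible f k /\ admissible g k /\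
       (forall h, Sset H f k h <-> Sset H g k h)) <-> sim f g)
  /\
  (forall k l : nat, admissible f k -> admissible g l ->
     ((exists h, Sset H f k h /\ Sset H g l h) -> (l <= k)%nat) /\
     (Sset H g l (dscale f k) -> ~ sim f g -> (l + 1 <= k)%nat))
  /\
  (forall N : nat, exists k l : nat, (N <= k + l)%nat /\
     admissible f k /\ admissible g l /\
     exists h, Sset H f k h /\ Sset H g l h).
Proof.
  destruct (get_prof H HH f d1 Hf snf hd1 hf1) as [δf [Af Pf]].
  destruct (get_prof H HH g d2 Hg sng hd2 hg2) as [δg [Ag Pg]].
  assert (Hgf : exists C, ev (fun t => Rabs (g t) <= C * Rabs (f t))) by exact hgf.
  pose proof (pf_d _ _ _ _ Pf) as Hδf. pose proof (pf_d _ _ _ _ Pg) as Hδg.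
  pose proof (pf_dA _ _ _ _ Pf) as HAf. pose proof (pf_dA _ _ _ _ Pg) as HAg.
  assert (PartA : forall k l h, Sset H f k h -> Sset H g l h -> (l <= k)%nat).
  { intros k l h [Hh [_ Hpf]] [_ [Hpg _]].
    destruct (Compare_dec.le_lt_dec l k) as [|Hlt]; auto. exfalso.
    destruct Hpg as [L [HL0 HL]].
    destruct (F2 H HH f g δf Af δg Ag Pf Pg Hgf l) as [C HC].
    pose proof (LD_diff H f g δf Af δg Ag l C Pf Pg ltac:(lia) HC) as Hd.
    pose proof (LD_chain H f δf Af (S k) Pf ltac:(lia) (l - S k)) as Hch.
    replace (S k + (l - S k))%nat with l in Hch by lia.
    set (β := ln (Rmax C 1) / INR l) in *.
    apply HL0. apply (lim_uniq (fun t => Rabs (h t / dscale g l t))); auto.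
    apply (is_lim_le_le_loc (fun _ => 0) (fun t => exp β * Rabs (h t / dscale f (S k) t))).
    - eapply ev_mono. apply (ev_and _ _ Hd Hch). intros t [H1 H2]. split. apply Rabs_pos.
      replace (Rabs (h t / dscale g l t)) with (Rabs (h t / dscale f (S k) t) * (dscale f (S k) t / dscale g l t)).
      + rewrite Rmult_comm. apply Rmult_le_compat_r. apply Rabs_pos.
        rewrite dscale_div. apply exp_le_mono. lra.
      + pose proof (dscale_pos f (S k) t). pose proof (dscale_pos g l t).
        rewrite !Rabs_div by lra. rewrite (Rabs_pos_eq (dscale f (S k) t)), (Rabs_pos_eq (dscale g l t)) by lra.
        field. lra.
    - apply is_lim_const.
    - replace (Finite 0) with (Rbar_mult (exp β) 0) by (simpl; rewrite Rmult_0_r; auto).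
      apply is_lim_scal_l. apply lim_abs0. apply Hpf. }
  split; [|split].
  - split.
    + intros [k [Ak [Bk Hs]]].
      assert (Hk : (1 <= k)%nat).
      { destruct k. exfalso; apply (not_adm0 H f δf Af Pf Ak). lia. }
      pose proof (proj1 (Hs (dscale f k)) (self_S H HH f δf Af k Pf Hk)) as [_ [Hp _]].
      apply (KEY H HH f g δf Af δg Ag k); auto.
    + intros [c [Hc Hlim]].
      destruct (pf_good _ _ _ _ Pg 0) as [Ng0 _].
      assert (Hca : 0 < Rabs c) by (apply Rabs_pos_lt; auto).
      rewrite lim_fin in Hlim.
      assert (Hfg : exists C, ev (fun t => Rabs (f t) <= C * Rabs (g t))).
      { exists (Rabs c + 1). eapply ev_mono. apply (ev_and _ _ (Hlim 1 ltac:(lra)) Ng0). intros t [H1 H2].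
        simpl in H2. pose proof (Rabs_pos_lt _ H2).
        pose proof (Rabs_triang_inv (f t / g t) c). rewrite Rabs_div in H3 by auto.
        assert (Rabs (f t) / Rabs (g t) <= Rabs c + 1) by lra.
        apply Rmult_le_compat_r with (r := Rabs (g t)) in H4; [|lra].
        unfold Rdiv in H4. rewrite Rmult_assoc, Rinv_l, Rmult_1_r in H4; lra. }
      destruct (nat_above (Rmax (Rmax Af Ag) 1)) as [k Hk].
      pose proof (Rmax_l (Rmax Af Ag) 1). pose proof (Rmax_r (Rmax Af Ag) 1).
      pose proof (Rmax_l Af Ag). pose proof (Rmax_r Af Ag).
      assert (Hk1 : (1 <= k)%nat).
      { destruct k. simpl in Hk. lra. lia. }
      exists k. split. apply (admissible_big H f δf Af k Pf); lra. split. apply (admissible_big H g δg Ag k Pg); lra.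
      destruct (ratio_lim H HH f g δf Af δg Ag k Pf Pg Hk1 Hgf Hfg) as [ρ1 [Hρ1 Hl1]].
      destruct (ratio_lim H HH f g δf Af δg Ag (S k) Pf Pg ltac:(lia) Hgf Hfg) as [ρ2 [Hρ2 Hl2]].
      intros h.
      destruct (scale_equiv (dscale f k) (dscale g k) h ρ1) as [E1 _]; auto; try (intros; apply dscale_pos).
      destruct (scale_equiv (dscale f (S k)) (dscale g (S k)) h ρ2) as [_ E2]; auto; try (intros; apply dscale_pos).
      unfold Sset. rewrite E1, E2. tauto.
  - intros k l Ak Bl. split.
    + intros [h [H1 H2]]. apply (PartA k l h); auto.
    + intros Hs Hns.
      assert (Hk : (1 <= k)%nat).
      { destruct k. exfalso; apply (not_adm0 H f δf Af Pf Ak). lia. }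
      pose proof (PartA k l _ (self_S H HH f δf Af k Pf Hk) Hs) as Hlk.
      destruct (Nat.eq_dec l k) as [->|Hne]; [|lia].
      exfalso. apply Hns. destruct Hs as [_ [Hp _]].
      apply (KEY H HH f g δf Af δg Ag k); auto.
  - intros N.
    destruct (nat_above (Rmax Ag 1)) as [l0 Hl0].
    pose proof (Rmax_l Ag 1). pose proof (Rmax_r Ag 1).
    assert (Hl01 : (1 <= l0)%nat) by (destruct l0; [simpl in Hl0; lra|lia]).
    assert (Hl0p : 0 < INR l0) by (apply lt_0_INR; lia).
    destruct (nat_above (Rmax (Rmax Af 1) (Af * INR l0 / δg))) as [k0 Hk0].
    pose proof (Rmax_l (Rmax Af 1) (Af * INR l0 / δg)). pose proof (Rmax_r (Rmax Af 1) (Af * INR l0 / δg)).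
    pose proof (Rmax_l Af 1). pose proof (Rmax_r Af 1).
    set (k := Nat.max k0 N).
    assert (Hkk0 : INR k0 <= INR k) by (apply le_INR; apply Nat.le_max_l).
    assert (Hk1 : (1 <= k)%nat) by (destruct k; [simpl in Hkk0; lra|lia]).
    assert (Hkp : 0 < INR k) by (apply lt_0_INR; lia).
    set (h := dscale f k).
    destruct (nat_above (Rmax (Ag * INR k / δf) (INR l0))) as [L0 HL0].
    pose proof (Rmax_l (Ag * INR k / δf) (INR l0)). pose proof (Rmax_r (Ag * INR k / δf) (INR l0)).
    assert (Hl0L : (l0 <= L0)%nat) by (apply Nat.lt_le_incl; apply INR_lt; lra).
    assert (HL0p : 0 < INR L0) by lra.
    destruct (LD_bounds H f δf Af k Pf Hk1) as [Kf HKf].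
    assert (NP0 : ~ prec h (dscale g l0)).
    { destruct (LD_bounds H g δg Ag l0 Pg Hl01) as [Kg HKg].
      intro Hp. unfold prec in Hp.
      assert (Hinf : is_lim (fun t => h t / dscale g l0 t) p_infty p_infty).
      { apply (is_lim_ext (fun t => exp (LD f k t - LD g l0 t))). intros t; unfold h; rewrite dscale_div; auto.
        apply exp_lim_p. apply (ln_lin_p _ (δg / INR l0 - Af / INR k) (- (Kf + Kg))).
        - assert (Hn : Af * INR l0 < δg * INR k).
          { assert (Q8 : Af * INR l0 / δg < INR k) by lra.
            apply Rmult_lt_compat_r with (r := δg) in Q8; auto.
            unfold Rdiv in Q8. rewrite Rmult_assoc, Rinv_l, Rmult_1_r in Q8 by lra. lra. }
          replace (δg / INR l0 - Af / INR k) with ((δg * INR k - Af * INR l0) / (INR l0 * INR k)) by (field; lra).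
          apply Rdiv_lt_0_compat. lra. nra.
        - eapply ev_mono. apply (ev_and _ _ HKf HKg). intros t [[A1 A2] [B1 B2]]. lra. }
      pose proof (lim_uniq _ _ _ Hp Hinf). discriminate. }
    assert (PL : prec h (dscale g L0)).
    { destruct (LD_bounds H g δg Ag L0 Pg ltac:(lia)) as [Kg HKg].
      unfold prec.
      apply (is_lim_ext (fun t => exp (LD f k t - LD g L0 t))). intros t; unfold h; rewrite dscale_div; auto.
      apply exp_lim_m. apply (ln_lin_m _ (Ag / INR L0 - δf / INR k) (Kf + Kg)).
      - assert (Hn : Ag * INR k < δf * INR L0).
        { assert (Q8 : Ag * INR k / δf < INR L0) by lra.
          apply Rmult_lt_compat_r with (r := δf) in Q8; auto.
          unfold Rdiv in Q8. rewrite Rmult_assoc, Rinv_l, Rmult_1_r in Q8 by lra. lra. }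
        replace (Ag / INR L0 - δf / INR k) with ((Ag * INR k - δf * INR L0) / (INR L0 * INR k)) by (field; lra).
        assert (0 < - ((Ag * INR k - δf * INR L0) / (INR L0 * INR k))); [|lra].
        replace (- ((Ag * INR k - δf * INR L0) / (INR L0 * INR k))) with ((δf * INR L0 - Ag * INR k) / (INR L0 * INR k)) by (field; lra).
        apply Rdiv_lt_0_compat. lra. nra.
      - eapply ev_mono. apply (ev_and _ _ HKf HKg). intros t [[A1 A2] [B1 B2]]. lra. }
    destruct (search (fun j => prec h (dscale g j)) l0 (L0 - l0) NP0) as [l [Hl1 [Hl2 Hl3]]].
    { replace (l0 + (L0 - l0))%nat with L0 by lia. auto. }
    assert (Hll0 : INR l0 <= INR l) by (apply le_INR; auto).
    exists k, l. split. unfold k; lia.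
    split. apply (admissible_big H f δf Af k Pf); lra.
    split. apply (admissible_big H g δg Ag l Pg); lra.
    exists h. split. apply (self_S H HH f δf Af k Pf Hk1).
    split; [|split].
    + apply (H_dscale H HH f δf Af k Pf Hk1).
    + assert (Hq : H (fun t => h t / dscale g l t)).
      { apply (H_div H HH). apply (H_dscale H HH f δf Af k Pf Hk1). apply (H_dscale H HH g δg Ag l Pg); lia.
        exists 0. intros t _. pose proof (dscale_pos g l t). lra. }
      destruct (H_lim_abs H HH _ Hq) as [M HM]. exists M. split; auto.
      intro HM0. subst M. apply Hl2. unfold prec. apply lim_abs0. auto.
    + exact Hl3.
Qed.
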